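(* Let $\alpha\in(0,1)$ and let $\phi:[0,1]\to[0,\infty)$ be four times continuously differentiable on $(0,1]$ with finite constants $W>0$, $c$, $c'$ such that $(2-\alpha)(3-\alpha)(4-\alpha)Wp^{\alpha-4}+c'\le|\phi^{(4)}(p)|\le(2-\alpha)(3-\alpha)(4-\alpha)Wp^{\alpha-4}+c$ for all $p\in(0,1]$. Let $n\ge1$, and $\Delta,p$ with $\frac1n\lesssim\Delta<p\le1$, and let $\tilde N\sim\mathrm{Poisson}(np)$. Then $$\mathrm{Var}\Big[\bar\phi_\Delta\Big(\frac{\tilde N}{n}\Big)-\frac{\tilde N}{2n^2}\bar\phi_\Delta^{(2)}\Big(\frac{\tilde N}{n}\Big)-\phi(p)+\frac{p\phi^{(2)}(p)}{2n}\Big]\lesssim\frac{p^{2\alpha-1}}{n}+\frac{1}{n^4\Delta^{4-2\alpha}}+\frac pn.$$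
   Context: For the Bernstein basis $B_{\nu,N}(t)=\binom N\nu t^\nu(1-t)^{N-\nu}$ define $H_L(x;\phi,a,b)=\phi(a)+\sum_{m=1}^L\frac{\phi^{(m)}(a)}{m!}(x-a)^m\sum_{\ell=0}^{L-m}\frac{L+1}{L+\ell+1}B_{\ell,L+\ell+1}\big(\tfrac{x-a}{b-a}\big)$ (derivatives at $1$ are one-sided). For $\Delta\in(0,1]$, $\bar\phi_\Delta:[0,\infty)\to\mathbb{R}$ is $\bar\phi_\Delta(x)=H_4(\Delta/2;\phi,\Delta,\Delta/2)$ if $x\le\Delta/2$; $H_4(x;\phi,\Delta,\Delta/2)$ if $\Delta/2<x<\Delta$; $\phi(x)$ if $\Delta\le x\le1$; $H_4(x;\phi,1,2)$ if $1<x<2$; $H_4(2;\phi,1,2)$ if $x\ge2$; $\bar\phi^{(2)}_\Delta$ is its second derivative. $a\lesssim b$ means $a\le Cb$ for a positive constant $C$ not depending on $n,\Delta,p$ (possibly on $\phi,\alpha$); $\frac1n\lesssim\Delta$ means $\Delta\ge c_0/n$ for a fixed constant $c_0>0$. *)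

(* Defs.v *)
From Stdlib Require Import Reals.
From Coquelicot Require Import Coquelicot.
Open Scope R_scope.

Definition bernstein (nu N : nat) (t : R) : R :=
  Binomial.C N nu * t ^ nu * (1 - t) ^ (N - nu).

(* H_L(x; phi, a, b), where dphi m a stands for phi^{(m)}(a) (m >= 1). *)
Definition H (L : nat) (phi : R -> R) (dphi : nat -> R -> R) (a b x : R) : R :=
  phi a +
  sum_f 1 L (fun m =>
    dphi m a / INR (Factorial.fact m) * (x - a) ^ m *
    sum_f_R0 (fun l => INR (L + 1) / INR (L + l + 1)
                        * bernstein l (L + l + 1) ((x - a) / (b - a))) (L - m)).

(* \bar phi_Delta, defined on all of R (the first branch also covers x < 0,
   which is irrelevant since it is only evaluated at x >= 0). *)
Definition phibar (phi : R -> R) (dphi : nat -> R -> R) (D : R) (x : R) : R :=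
  if Rle_dec x (D / 2) then H 4 phi dphi D (D / 2) (D / 2)
  else if Rlt_dec x D then H 4 phi dphi D (D / 2) x
  else if Rle_dec x 1 then phi x
  else if Rlt_dec x 2 then H 4 phi dphi 1 2 x
  else H 4 phi dphi 1 2 2.

Definition phibar2 (phi : R -> R) (dphi : nat -> R -> R) (D : R) (x : R) : R :=
  Derive_n (phibar phi dphi D) 2 x.

Definition I01 (y : R) : Prop := 0 < y <= 1.

Definition deriv_within01 (g : R -> R) (g'x : R) (x : R) : Prop :=
  filterlim (fun y => (g y - g x) / (y - x))
    (within (fun y => I01 y /\ y <> x) (locally x)) (locally g'x).

Definition cont_within01 (g : R -> R) (x : R) : Prop :=
  filterlim g (within I01 (locally x)) (locally (g x)).

Definition poisson_pmf (lam : R) (k : nat) : R :=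
  exp (- lam) * lam ^ k / INR (Factorial.fact k).

Definition poisson_mean (lam : R) (g : nat -> R) : R :=
  Series (fun k => poisson_pmf lam k * g k).

Definition poisson_var (lam : R) (g : nat -> R) : R :=
  Series (fun k => poisson_pmf lam k * (g k - poisson_mean lam g) ^ 2).

(* Main.v *)
Require Import Defs.
From Stdlib Require Import Reals.
From Coquelicot Require Import Coquelicot.
From Stdlib Require Import Lra Lia Factorial List.
Open Scope R_scope.

Lemma exp_ser x : is_series (fun k => x ^ k / INR (Factorial.fact k)) (exp x).
Proof.
  generalize (is_exp_Reals x). unfold is_pseries. apply is_series_ext.
  intro k. rewrite pow_n_pow. reflexivity.
Qed.

Lemma is_series_ext2 (a b : nat -> R) (l l' : R) :
  is_series a l -> (forall n, a n = b n) -> l = l' -> is_series b l'.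
Proof. intros H E L. subst l'. eapply is_series_ext; eauto. Qed.

Lemma pmf_ser1 lam : is_series (poisson_pmf lam) 1.
Proof.
  assert (H := is_series_scal_l (exp (- lam)) _ _ (exp_ser lam)).
  replace 1 with (scal (exp (-lam)) (exp lam)).
  - revert H; apply is_series_ext. intro k. unfold poisson_pmf, scal; simpl.
    unfold mult; simpl. unfold Rdiv. ring.
  - unfold scal; simpl; unfold mult; simpl. rewrite <- exp_plus.
    replace (-lam + lam) with 0 by ring. apply exp_0.
Qed.

Lemma pmf_S lam k : poisson_pmf lam (S k) * INR (S k) = lam * poisson_pmf lam k.
Proof.
  unfold poisson_pmf. rewrite fact_simpl, mult_INR. simpl pow.
  assert (INR (S k) <> 0) by (apply not_0_INR; lia).
  assert (INR (Factorial.fact k) <> 0) by (apply INR_fact_neq_0).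
  field. split; auto.
Qed.

Lemma pmf_ser_k lam : is_series (fun k => poisson_pmf lam k * INR k) lam.
Proof.
  apply is_series_decr_1.
  eapply is_series_ext2. apply (is_series_scal_l lam _ _ (pmf_ser1 lam)).
  intro k. change (lam * poisson_pmf lam k = poisson_pmf lam (S k) * INR (S k)). rewrite pmf_S. reflexivity.
  change (lam * 1 = lam + - (poisson_pmf lam 0 * 0)). ring.
Qed.

Lemma pmf_ser_kk lam : is_series (fun k => poisson_pmf lam k * (INR k * (INR k - 1))) (lam ^ 2).
Proof.
  apply is_series_decr_1.
  eapply is_series_ext2. apply (is_series_scal_l lam _ _ (pmf_ser_k lam)).
  intro k. rewrite S_INR. assert (E := pmf_S lam k). rewrite S_INR in E.
  change (lam * (poisson_pmf lam k * INR k) = poisson_pmf lam (S k) * ((INR k + 1) * (INR k + 1 - 1))).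
  transitivity (poisson_pmf lam (S k) * (INR k + 1) * INR k); [rewrite E; ring | ring].
  change (lam * lam = lam ^ 2 + - (poisson_pmf lam 0 * (0 * (0 - 1)))). ring.
Qed.

Lemma exp_neg_nat k : exp (- INR k) = exp (-1) ^ k.
Proof.
  induction k. simpl. rewrite Ropp_0. apply exp_0.
  rewrite S_INR. simpl. rewrite <- IHk, <- exp_plus. f_equal. ring.
Qed.

Lemma pmf_ser_e lam : is_series (fun k => poisson_pmf lam k * exp (- INR k))
   (exp (- lam) * exp (lam * exp (-1))).
Proof.
  assert (H := is_series_scal_l (exp (- lam)) _ _ (exp_ser (lam * exp (-1)))).
  revert H; apply is_series_ext. intro k. unfold poisson_pmf, scal; simpl.
  unfold mult; simpl. rewrite exp_neg_nat, Rpow_mult_distr. unfold Rdiv. ring.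
Qed.

Lemma pmf_nonneg lam k : 0 <= lam -> 0 <= poisson_pmf lam k.
Proof.
  intro. unfold poisson_pmf. apply Rmult_le_pos. apply Rmult_le_pos.
  left; apply exp_pos. apply pow_le; auto.
  left; apply Rinv_0_lt_compat, INR_fact_lt_0.
Qed.

Lemma ex_ser_scal c (a : nat -> R) : ex_series a -> ex_series (fun n => c * a n).
Proof. intro H. exact (ex_series_scal_l (V := R_NormedModule) c a H). Qed.

Lemma ex_ser_plus (a b : nat -> R) : ex_series a -> ex_series b -> ex_series (fun n => a n + b n).
Proof. intros H1 H2. exact (ex_series_plus (V := R_NormedModule) a b H1 H2). Qed.

Lemma var_le lam (g T : nat -> R) :
  0 <= lam -> (forall k, g k ^ 2 <= T k) ->
  ex_series (fun k => poisson_pmf lam k * T k) ->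
  poisson_var lam g <= Series (fun k => poisson_pmf lam k * T k).
Proof.
  intros Hl HT HS.
  assert (E1 : ex_series (poisson_pmf lam)) by (eexists; apply pmf_ser1).
  assert (E2 : ex_series (fun k => poisson_pmf lam k * g k ^ 2)).
  { apply (@ex_series_le _ R_CompleteNormedModule _ (fun k => poisson_pmf lam k * T k)); auto.
    intro k. change (Rabs (poisson_pmf lam k * g k ^ 2) <= poisson_pmf lam k * T k).
    assert (0 <= poisson_pmf lam k) by (apply pmf_nonneg; auto).
    assert (0 <= g k ^ 2) by apply pow2_ge_0.
    rewrite Rabs_pos_eq. apply Rmult_le_compat_l; auto. apply Rmult_le_pos; auto. }
  assert (E3 : ex_series (fun k => poisson_pmf lam k * g k)).
  { apply (@ex_series_le _ R_CompleteNormedModule _ (fun k => poisson_pmf lam k + poisson_pmf lam k * g k ^ 2)).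
    intro k. change (Rabs (poisson_pmf lam k * g k) <= poisson_pmf lam k + poisson_pmf lam k * g k ^ 2).
    rewrite Rabs_mult, (Rabs_pos_eq (poisson_pmf _ _)).
    2: apply pmf_nonneg; auto.
    assert (Rabs (g k) <= 1 + g k ^ 2).
    { destruct (Rle_dec (Rabs (g k)) 1). nra. rewrite <- (pow2_abs (g k)). nra. }
    assert (0 <= poisson_pmf lam k) by (apply pmf_nonneg; auto). nra.
    apply ex_ser_plus; auto. }
  unfold poisson_var. set (m := poisson_mean lam g).
  assert (Ev : Series (fun k => poisson_pmf lam k * (g k - m) ^ 2) =
     Series (fun k => poisson_pmf lam k * g k ^ 2) - m ^ 2).
  { rewrite (Series_ext _ (fun k => (poisson_pmf lam k * g k ^ 2 + (-2 * m) * (poisson_pmf lam k * g k))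
                 + m ^ 2 * poisson_pmf lam k)).
    2: intro; ring.
    rewrite Series_plus, Series_plus, !Series_scal_l.
    rewrite (is_series_unique _ _ (pmf_ser1 lam)). unfold m, poisson_mean. ring.
    auto. apply ex_ser_scal; auto.
    apply ex_ser_plus; auto. apply ex_ser_scal; auto.
    apply ex_ser_scal; auto. }
  rewrite Ev.
  assert (Series (fun k => poisson_pmf lam k * g k ^ 2) <= Series (fun k => poisson_pmf lam k * T k)).
  { apply Series_le; auto. intro k. split. apply Rmult_le_pos. apply pmf_nonneg; auto. apply pow2_ge_0.
    apply Rmult_le_compat_l; auto. apply pmf_nonneg; auto. }
  assert (0 <= m ^ 2) by apply pow2_ge_0. lra.
Qed.

Lemma ser_lin (a b : nat -> R) la lb c1 c2 :
  is_series a la -> is_series b lb ->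
  is_series (fun k => c1 * a k + c2 * b k) (c1 * la + c2 * lb).
Proof.
  intros Ha Hb.
  exact (is_series_plus (V := R_NormedModule) _ _ _ _
     (is_series_scal_l (V := R_NormedModule) c1 _ _ Ha) (is_series_scal_l (V := R_NormedModule) c2 _ _ Hb)).
Qed.

Lemma ser_T lam n p A B D : 0 < n -> lam = n * p ->
  is_series (fun k => poisson_pmf lam k * (A * (INR k / n - p) ^ 2 + B + D * exp (lam / 2 - INR k)))
    (A * (p / n) + B + D * (exp (lam / 2) * exp (- lam) * exp (lam * exp (-1)))).
Proof.
  intros Hn Hl.
  assert (H1 := ser_lin _ _ _ _ (A / n ^ 2) (A / n ^ 2 - 2 * A * p / n) (pmf_ser_kk lam) (pmf_ser_k lam)).
  assert (H2 := ser_lin _ _ _ _ 1 (A * p ^ 2 + B) H1 (pmf_ser1 lam)).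
  assert (H3 := ser_lin _ _ _ _ 1 (D * exp (lam / 2)) H2 (pmf_ser_e lam)).
  eapply is_series_ext2. apply H3.
  - intro k. replace (lam / 2 - INR k) with (lam / 2 + - INR k) by ring. rewrite exp_plus. field. lra.
  - subst lam. field. lra.
Qed.

Lemma rp_pos x y : 0 < Rpower x y.
Proof. unfold Rpower. apply exp_pos. Qed.

Lemma rp_one c : Rpower 1 c = 1.
Proof. unfold Rpower. rewrite ln_1, Rmult_0_r. apply exp_0. Qed.

Lemma rp_anti a b c : 0 < a <= b -> c <= 0 -> Rpower b c <= Rpower a c.
Proof.
  intros Hab Hc. rewrite <- (Ropp_involutive c). rewrite (Rpower_Ropp b (- c)), (Rpower_Ropp a (-c)).
  apply Rinv_le_contravar. apply rp_pos. apply Rle_Rpower_l; lra.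
Qed.

Lemma rp_mono a b c : 0 < a <= b -> 0 <= c -> Rpower a c <= Rpower b c.
Proof. intros. apply Rle_Rpower_l; lra. Qed.

Lemma rp_ge1 x c : 0 < x <= 1 -> c <= 0 -> 1 <= Rpower x c.
Proof. intros. rewrite <- (rp_one c). apply rp_anti; lra. Qed.

Lemma rp_le1 x c : 0 < x <= 1 -> 0 <= c -> Rpower x c <= 1.
Proof. intros. rewrite <- (rp_one c). apply rp_mono; lra. Qed.

Lemma ball_R (x e y : R) : ball x e y <-> Rabs (y - x) < e.
Proof. reflexivity. Qed.

Lemma dw_is_derive g l x : 0 < x < 1 -> deriv_within01 g l x -> is_derive g x l.
Proof.
  intros Hx Hd. apply is_derive_Reals. intros eps Heps.
  unfold deriv_within01 in Hd; assert (Hd2 := proj1 (@filterlim_locally R R_UniformSpace _ (within_filter _ _ _ (@filter_filter _ _ (locally_filter x))) _ l) Hd); clear Hd; rename Hd2 into Hd. destruct (Hd (mkposreal eps Heps)) as [d Hdd].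
  assert (Hdp : 0 < Rmin d (Rmin x (1 - x))).
  { apply Rmin_pos. apply cond_pos. apply Rmin_pos; lra. }
  exists (mkposreal _ Hdp). intros h Hh0 Hh. simpl in Hh.
  assert (Hm1 := Rmin_l d (Rmin x (1 - x))). assert (Hm2 := Rmin_r d (Rmin x (1 - x))).
  assert (Hm3 := Rmin_l x (1 - x)). assert (Hm4 := Rmin_r x (1 - x)).
  assert (Hb : Rabs (x + h - x) < d) by (replace (x + h - x) with h by ring; lra).
  specialize (Hdd (x + h) Hb).
  assert (HI : I01 (x + h) /\ x + h <> x).
  { apply Rabs_def2 in Hh. unfold I01. split; [split|]; lra. }
  specialize (Hdd HI). apply ball_R in Hdd. simpl in Hdd.
  replace (x + h - x) with h in Hdd by ring. exact Hdd.
Qed.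

Lemma dw_cont g l x : deriv_within01 g l x ->
  forall eps, 0 < eps -> exists d, 0 < d /\ forall y, I01 y -> Rabs (y - x) < d -> Rabs (g y - g x) < eps.
Proof.
  intros Hd eps Heps.
  unfold deriv_within01 in Hd; assert (Hd2 := proj1 (@filterlim_locally R R_UniformSpace _ (within_filter _ _ _ (@filter_filter _ _ (locally_filter x))) _ l) Hd); clear Hd; rename Hd2 into Hd. destruct (Hd (mkposreal 1 Rlt_0_1)) as [d Hdd].
  assert (HL : 0 < Rabs l + 1) by (assert (0 <= Rabs l) by apply Rabs_pos; lra).
  assert (Hdp : 0 < Rmin d (eps / (Rabs l + 1))).
  { apply Rmin_pos. apply cond_pos. apply Rdiv_lt_0_compat; lra. }
  exists (Rmin d (eps / (Rabs l + 1))). split; auto. intros y Hy Hyx.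
  destruct (Req_dec y x) as [E|E].
  { subst. replace (g x - g x) with 0 by ring. rewrite Rabs_R0; auto. }
  assert (Hm1 := Rmin_l d (eps / (Rabs l + 1))). assert (Hm2 := Rmin_r d (eps / (Rabs l + 1))).
  assert (Hb : ball x d y) by (apply ball_R; lra).
  specialize (Hdd y Hb (conj Hy E)).
  assert (Hdd' : Rabs ((g y - g x) / (y - x) - l) < 1) by exact Hdd. clear Hdd. rename Hdd' into Hdd.
  assert (Hyx0 : y - x <> 0) by lra.
  assert (Eq : g y - g x = ((g y - g x) / (y - x)) * (y - x)) by (field; auto).
  rewrite Eq, Rabs_mult.
  assert (Rabs ((g y - g x) / (y - x)) <= Rabs l + 1).
  { assert (H1 := Rabs_triang_inv ((g y - g x) / (y - x)) l). lra. }
  assert (Rabs (y - x) * (Rabs l + 1) < eps).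
  { apply Rlt_le_trans with (eps / (Rabs l + 1) * (Rabs l + 1)).
    apply Rmult_lt_compat_r; lra. right; field; lra. }
  assert (0 <= Rabs (y - x)) by apply Rabs_pos.
  assert (0 <= Rabs ((g y - g x) / (y - x))) by apply Rabs_pos. nra.
Qed.

Lemma is_derive_cont f x l : is_derive f x l -> continuity_pt f x.
Proof.
  intro H. apply is_derive_Reals in H. apply derivable_continuous_pt. exists l. exact H.
Qed.

Lemma nonincr (u u' : R -> R) y z : y < z ->
  (forall t, y <= t < z -> is_derive u t (u' t)) ->
  (forall t, y <= t < z -> u' t <= 0) ->
  (forall eps, 0 < eps -> exists w, y < w < z /\ u z <= u w + eps) -> u z <= u y.
Proof.
  intros Hyz Hd Hs Hc. apply le_epsilon. intros eps Heps.
  destruct (Hc eps Heps) as [w [Hw Hw2]].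
  destruct (MVT_gen u y w u') as [c [Hc1 Hc2]].
  - intros t Ht. rewrite Rmin_left in Ht by lra. rewrite Rmax_right in Ht by lra. apply Hd; lra.
  - intros t Ht. rewrite Rmin_left in Ht by lra. rewrite Rmax_right in Ht by lra.
    apply is_derive_cont with (u' t). apply Hd; lra.
  - rewrite Rmin_left in Hc1 by lra. rewrite Rmax_right in Hc1 by lra.
    assert (u' c <= 0) by (apply Hs; lra).
    assert (u' c * (w - y) <= 0) by (apply Rmult_le_0_r; lra). lra.
Qed.

Lemma mono_cmp (f f' h h' : R -> R) y z : 0 < y -> y <= z -> z <= 1 ->
  (forall t, 0 < t <= 1 -> deriv_within01 f (f' t) t) ->
  (forall t, 0 < t -> is_derive h t (h' t)) ->
  (forall t, y <= t < z -> Rabs (f' t) <= h' t) ->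
  Rabs (f z - f y) <= h z - h y.
Proof.
  intros Hy Hyz Hz Hf Hh Hb.
  destruct (Req_dec y z) as [E|E].
  { subst. replace (f z - f z) with 0 by ring. rewrite Rabs_R0. lra. }
  assert (Hyz' : y < z) by lra.
  assert (Hc : forall eps, 0 < eps -> exists w, y < w < z /\ Rabs (f z - f w) < eps /\ Rabs (h z - h w) < eps).
  { intros eps Heps.
    destruct (dw_cont f (f' z) z (Hf z (conj (Rlt_le_trans _ _ _ Hy Hyz) Hz)) eps Heps) as [d1 [Hd1 H1]].
    assert (Hcz := is_derive_cont _ _ _ (Hh z (Rlt_le_trans _ _ _ Hy Hyz))).
    destruct (Hcz eps Heps) as [d2 [Hd2 H2]].
    assert (Hd : 0 < Rmin d1 d2) by (apply Rmin_pos; lra).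
    assert (Hm1 := Rmin_l d1 d2). assert (Hm2 := Rmin_r d1 d2).
    remember (Rmin d1 d2) as d.
    assert (Hm3 := Rmax_l y (z - d / 2)). assert (Hm4 := Rmax_r y (z - d / 2)).
    assert (Hm5 : Rmax y (z - d / 2) < z) by (apply Rmax_lub_lt; lra).
    remember (Rmax y (z - d / 2)) as r.
    exists ((r + z) / 2). split. split; lra.
    assert (Hwz : Rabs ((r + z) / 2 - z) < d).
    { rewrite Rabs_left by lra. lra. }
    split.
    - rewrite Rabs_minus_sym. apply H1. unfold I01. split; lra. lra.
    - rewrite Rabs_minus_sym. apply H2. split. unfold D_x, no_cond. split; auto. lra.
      unfold dist; simpl; unfold R_dist. lra. }
  assert (A1 : f z - h z <= f y - h y).
  { apply (nonincr (fun t => f t - h t) (fun t => f' t - h' t) y z Hyz').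
    - intros t Ht. apply (is_derive_minus (K := R_AbsRing) (V := R_NormedModule)).
      apply dw_is_derive. lra. apply Hf; lra. apply Hh; lra.
    - intros t Ht. specialize (Hb t Ht). assert (f' t <= Rabs (f' t)) by apply Rle_abs.
      assert (- f' t <= Rabs (f' t)) by (rewrite <- Rabs_Ropp; apply Rle_abs). lra.
    - intros eps Heps. destruct (Hc (eps / 2)) as [w [Hw [Hw1 Hw2]]]. lra.
      exists w. split; auto. apply Rabs_def2 in Hw1. apply Rabs_def2 in Hw2. lra. }
  assert (A2 : - f z - h z <= - f y - h y).
  { apply (nonincr (fun t => - f t - h t) (fun t => - f' t - h' t) y z Hyz').
    - intros t Ht. apply (is_derive_minus (K := R_AbsRing) (V := R_NormedModule)).
      apply (is_derive_opp (K := R_AbsRing) (V := R_NormedModule)).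
      apply dw_is_derive. lra. apply Hf; lra. apply Hh; lra.
    - intros t Ht. specialize (Hb t Ht). assert (f' t <= Rabs (f' t)) by apply Rle_abs.
      assert (- f' t <= Rabs (f' t)) by (rewrite <- Rabs_Ropp; apply Rle_abs). lra.
    - intros eps Heps. destruct (Hc (eps / 2)) as [w [Hw [Hw1 Hw2]]]. lra.
      exists w. split; auto. apply Rabs_def2 in Hw1. apply Rabs_def2 in Hw2. lra. }
  apply Rabs_le. lra.
Qed.

Lemma is_derive_rp (M b t : R) : 0 < t ->
  is_derive (fun t => M * Rpower t b) t (M * b * Rpower t (b - 1)).
Proof.
  intro Ht. apply is_derive_Reals.
  rewrite Rmult_assoc. apply (derivable_pt_lim_scal (fun t => Rpower t b)).
  apply derivable_pt_lim_power; auto.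
Qed.

Lemma step_neg (f f' : R -> R) M beta : beta < 0 -> 0 <= M ->
  (forall t, 0 < t <= 1 -> deriv_within01 f (f' t) t) ->
  (forall t, 0 < t <= 1 -> Rabs (f' t) <= M * Rpower t (beta - 1)) ->
  forall y, 0 < y <= 1 -> Rabs (f y) <= (Rabs (f 1) + M / (- beta)) * Rpower y beta.
Proof.
  intros Hb HM Hd Hf y Hy.
  assert (H := mono_cmp f f' (fun t => (M / beta) * Rpower t beta)
     (fun t => M / beta * beta * Rpower t (beta - 1)) y 1 (proj1 Hy) (proj2 Hy) (Rle_refl 1) Hd).
  assert (H' : Rabs (f 1 - f y) <= M / beta * Rpower 1 beta - M / beta * Rpower y beta).
  { apply H. intros t Ht. apply is_derive_rp; auto.
    intros t Ht. replace (M / beta * beta) with M by (field; lra). apply Hf; lra. }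
  rewrite rp_one in H'.
  assert (Hg := rp_ge1 y beta Hy (Rlt_le _ _ Hb)).
  assert (E : M / beta * 1 - M / beta * Rpower y beta = M / (- beta) * (Rpower y beta - 1))
    by (field; lra).
  rewrite E in H'.
  assert (0 <= M / - beta) by (apply Rdiv_le_0_compat; lra).
  assert (Rabs (f y) <= Rabs (f 1) + Rabs (f 1 - f y)).
  { assert (H2 := Rabs_triang_inv (f y) (f 1)). rewrite Rabs_minus_sym in H2. lra. }
  assert (0 <= Rabs (f 1)) by apply Rabs_pos. nra.
Qed.

Lemma step_pos (f f' : R -> R) M a : 0 < a -> 0 <= M ->
  (forall t, 0 < t <= 1 -> deriv_within01 f (f' t) t) ->
  (forall t, 0 < t <= 1 -> Rabs (f' t) <= M * Rpower t (a - 1)) ->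
  forall y z, 0 < y -> y <= z -> z <= 1 -> Rabs (f z - f y) <= M / a * Rpower z a.
Proof.
  intros Ha HM Hd Hf y z Hy Hyz Hz.
  assert (H := mono_cmp f f' (fun t => (M / a) * Rpower t a)
     (fun t => M / a * a * Rpower t (a - 1)) y z Hy Hyz Hz Hd).
  assert (H' : Rabs (f z - f y) <= M / a * Rpower z a - M / a * Rpower y a).
  { apply H. intros t Ht. apply is_derive_rp; auto.
    intros t Ht. replace (M / a * a) with M by (field; lra). apply Hf; lra. }
  assert (0 <= M / a) by (apply Rdiv_le_0_compat; lra).
  assert (0 < Rpower y a) by apply rp_pos. nra.
Qed.

Lemma lip (f f' : R -> R) L y z : 0 < y -> y <= z -> z <= 1 ->
  (forall t, 0 < t <= 1 -> deriv_within01 f (f' t) t) ->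
  (forall t, y <= t < z -> Rabs (f' t) <= L) -> Rabs (f z - f y) <= L * (z - y).
Proof.
  intros Hy Hyz Hz Hd Hf.
  assert (H := mono_cmp f f' (fun t => L * t) (fun t => L) y z Hy Hyz Hz Hd).
  replace (L * (z - y)) with (L * z - L * y) by ring. apply H; auto.
  intros t Ht. simpl. auto_derive; auto. ring.
Qed.

Definition q1 : list R := 0 :: 1 :: 0 :: 0 :: 0 :: (-70) :: 224 :: (-280) :: 160 :: (-35) :: nil.
Definition q2 : list R := 0 :: 0 :: 1/2 :: 0 :: 0 :: (-35/2) :: 105/2 :: (-63) :: 35 :: (-15/2) :: nil.
Definition q3 : list R := 0 :: 0 :: 0 :: 1/6 :: 0 :: (-5/2) :: 20/3 :: (-15/2) :: 4 :: (-5/6) :: nil.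
Definition q4 : list R := 0 :: 0 :: 0 :: 0 :: 1/24 :: (-5/24) :: 5/12 :: (-5/12) :: 5/24 :: (-1/24) :: nil.

Fixpoint peval (l : list R) (t : R) : R :=
  match l with nil => 0 | a :: l' => a + t * peval l' t end.

Lemma fact_INR_S n : INR (fact (S n)) = INR (S n) * INR (fact n).
Proof. rewrite fact_simpl, mult_INR. reflexivity. Qed.

Lemma C_val1 : Binomial.C 5 0 = 1.
Proof. unfold Binomial.C. change (5-0)%nat with 5%nat. rewrite !fact_INR_S. simpl. field. Qed.
Lemma C_val2 : Binomial.C 6 1 = 6.
Proof. unfold Binomial.C. change (6-1)%nat with 5%nat. rewrite !fact_INR_S. simpl. field. Qed.
Lemma C_val3 : Binomial.C 7 2 = 21.
Proof. unfold Binomial.C. change (7-2)%nat with 5%nat. rewrite !fact_INR_S. simpl. field. Qed.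
Lemma C_val4 : Binomial.C 8 3 = 56.
Proof. unfold Binomial.C. change (8-3)%nat with 5%nat. rewrite !fact_INR_S. simpl. field. Qed.
Lemma C_val5 : Binomial.C 9 4 = 126.
Proof. unfold Binomial.C. change (9-4)%nat with 5%nat. rewrite !fact_INR_S. simpl. field. Qed.

Lemma H_eq phi dphi a s t : s <> 0 ->
  H 4 phi dphi a (a + s) (a + s * t) =
  phi a + dphi 1%nat a * s * peval q1 t + dphi 2%nat a * s ^ 2 * peval q2 t
        + dphi 3%nat a * s ^ 3 * peval q3 t + dphi 4%nat a * s ^ 4 * peval q4 t.
Proof.
  intro Hs.
  unfold H, sum_f, bernstein.
  replace (a + s - a) with s by ring.
  replace ((a + s * t - a) / s) with t by (field; auto).
  replace (a + s * t - a) with (s * t) by ring.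
  cbn -[INR fact Binomial.C pow].
  rewrite C_val1, C_val2, C_val3, C_val4. simpl fact. simpl INR. field.
Qed.

Lemma dplus (f g : R -> R) (x a b : R) : is_derive f x a -> is_derive g x b ->
  is_derive (fun t => f t + g t) x (a + b).
Proof. intros H1 H2. exact (is_derive_plus (K := R_AbsRing) (V := R_NormedModule) f g x a b H1 H2). Qed.
Lemma dmult (f g : R -> R) (x a b : R) : is_derive f x a -> is_derive g x b ->
  is_derive (fun t => f t * g t) x (a * g x + f x * b).
Proof. intros H1 H2. exact (is_derive_mult (K := R_AbsRing) f g x a b H1 H2 Rmult_comm). Qed.
Lemma dconst (c x : R) : is_derive (fun _ => c) x 0.
Proof. exact (is_derive_const (K := R_AbsRing) (V := R_NormedModule) c x). Qed.
Lemma did (x : R) : is_derive (fun t => t) x 1.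
Proof. exact (is_derive_id (K := R_AbsRing) x). Qed.
Lemma dcomp (f g : R -> R) (x a b : R) : is_derive f (g x) a -> is_derive g x b ->
  is_derive (fun t => f (g t)) x (b * a).
Proof. intros H1 H2. exact (is_derive_comp (K := R_AbsRing) (V := R_NormedModule) f g x a b H1 H2). Qed.
Lemma dext (f g : R -> R) (x l l' : R) : is_derive f x l -> (forall t, f t = g t) -> l = l' -> is_derive g x l'.
Proof. intros H E L. subst l'. exact (is_derive_ext (K := R_AbsRing) (V := R_NormedModule) f g x l E H). Qed.

Fixpoint padd (l1 l2 : list R) : list R :=
  match l1, l2 with
  | nil, _ => l2
  | _, nil => l1
  | a :: l1', b :: l2' => (a + b) :: padd l1' l2'
  end.

Fixpoint pder (l : list R) : list R :=
  match l with nil => nil | a :: l' => padd l' (0 :: pder l') end.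

Fixpoint sabs (l : list R) : R :=
  match l with nil => 0 | a :: l' => Rabs a + sabs l' end.

Lemma peval_padd l1 l2 t : peval (padd l1 l2) t = peval l1 t + peval l2 t.
Proof.
  revert l2; induction l1 as [|a l1 IH]; intros l2; simpl. ring.
  destruct l2 as [|b l2]; simpl. ring. rewrite IH. ring.
Qed.

Lemma peval_derive l t : is_derive (peval l) t (peval (pder l) t).
Proof.
  induction l as [|a l IH]; simpl.
  - apply dconst.
  - rewrite peval_padd. simpl.
    eapply dext. apply dplus. apply dconst. apply dmult. apply did. apply IH.
    intro; reflexivity. cbv beta; ring.
Qed.

Lemma sabs_pos l : 0 <= sabs l.
Proof. induction l; simpl. lra. assert (0 <= Rabs a) by apply Rabs_pos. lra. Qed.

Lemma peval_bound l t : Rabs t <= 1 -> Rabs (peval l t) <= sabs l.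
Proof.
  intro Ht. induction l as [|a l IH]; simpl.
  - rewrite Rabs_R0; lra.
  - eapply Rle_trans. apply Rabs_triang. rewrite Rabs_mult.
    assert (0 <= Rabs (peval l t)) by apply Rabs_pos.
    assert (0 <= Rabs t) by apply Rabs_pos. nra.
Qed.

Definition G (l1 l2 l3 l4 : list R) (ds : nat -> R) (s t : R) : R :=
  ds 1%nat * s * peval l1 t + ds 2%nat * s ^ 2 * peval l2 t
  + ds 3%nat * s ^ 3 * peval l3 t + ds 4%nat * s ^ 4 * peval l4 t.

Definition Gb (l1 l2 l3 l4 : list R) (ds : nat -> R) (s : R) : R :=
  Rabs (ds 1%nat) * Rabs s * sabs l1 + Rabs (ds 2%nat) * Rabs s ^ 2 * sabs l2
  + Rabs (ds 3%nat) * Rabs s ^ 3 * sabs l3 + Rabs (ds 4%nat) * Rabs s ^ 4 * sabs l4.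

Lemma G_bound l1 l2 l3 l4 ds s t : Rabs t <= 1 -> Rabs (G l1 l2 l3 l4 ds s t) <= Gb l1 l2 l3 l4 ds s.
Proof.
  intro Ht. unfold G, Gb.
  assert (B1 := peval_bound l1 t Ht). assert (B2 := peval_bound l2 t Ht).
  assert (B3 := peval_bound l3 t Ht). assert (B4 := peval_bound l4 t Ht).
  assert (T : forall (d : R) n l, Rabs (peval l t) <= sabs l ->
     Rabs (d * s ^ n * peval l t) <= Rabs d * Rabs s ^ n * sabs l).
  { intros d n l B. rewrite !Rabs_mult, RPow_abs. apply Rmult_le_compat_l.
    apply Rmult_le_pos; apply Rabs_pos. auto. }
  assert (T1 := T (ds 1%nat) 1%nat _ B1). rewrite !pow_1 in T1.
  assert (T2 := T (ds 2%nat) 2%nat _ B2). assert (T3 := T (ds 3%nat) 3%nat _ B3). assert (T4 := T (ds 4%nat) 4%nat _ B4).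
  match goal with |- Rabs (?A + ?B + ?C + ?D) <= _ =>
    assert (R1 := Rabs_triang (A + B + C) D); assert (R2 := Rabs_triang (A + B) C);
    assert (R3 := Rabs_triang A B) end. lra.
Qed.

Lemma G_derive_t l1 l2 l3 l4 ds s t :
  is_derive (G l1 l2 l3 l4 ds s) t (G (pder l1) (pder l2) (pder l3) (pder l4) ds s t).
Proof.
  unfold G.
  assert (K : forall c l, is_derive (fun t => c * peval l t) t (c * peval (pder l) t)).
  { intros c l. eapply dext. apply dmult. apply dconst. apply peval_derive. intro; reflexivity. cbv beta; ring. }
  apply dplus. apply dplus. apply dplus. all: apply K.
Qed.

Lemma G_derive l1 l2 l3 l4 ds a s x : s <> 0 ->
  is_derive (fun x => G l1 l2 l3 l4 ds s ((x - a) / s)) x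
    (G (pder l1) (pder l2) (pder l3) (pder l4) ds s ((x - a) / s) / s).
Proof.
  intro Hs. eapply dext. apply (dcomp (G l1 l2 l3 l4 ds s) (fun x => (x - a) / s)).
  apply G_derive_t.
  eapply dext. apply dmult. apply dplus. apply did. apply dconst. apply dconst.
  intro; reflexivity. reflexivity. intro; reflexivity. cbv beta; field. auto.
Qed.

Definition Hyp (alpha : R) (phi : R -> R) (dphi : nat -> R -> R) (K : R) : Prop :=
  (0 < alpha < 1) /\ 0 <= K /\
  (forall x, I01 x -> dphi 0%nat x = phi x) /\
  (forall m x, (m < 4)%nat -> I01 x -> deriv_within01 (dphi m) (dphi (S m) x) x) /\
  (forall m x, (1 <= m <= 4)%nat -> I01 x -> Rabs (dphi m x) <= K * Rpower x (alpha - INR m)) /\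
  (forall y z, 0 < y -> y <= z -> z <= 1 -> Rabs (phi z - phi y) <= K * Rpower z alpha).

Lemma Rmax4 a b c d : exists K, 0 <= K /\ a <= K /\ b <= K /\ c <= K /\ d <= K.
Proof.
  exists (Rmax 0 (Rmax (Rmax a b) (Rmax c d))).
  assert (H1 := Rmax_l 0 (Rmax (Rmax a b) (Rmax c d))). assert (H2 := Rmax_r 0 (Rmax (Rmax a b) (Rmax c d))).
  assert (H3 := Rmax_l (Rmax a b) (Rmax c d)). assert (H4 := Rmax_r (Rmax a b) (Rmax c d)).
  assert (H5 := Rmax_l a b). assert (H6 := Rmax_r a b). assert (H7 := Rmax_l c d). assert (H8 := Rmax_r c d).
  repeat split; lra.
Qed.

Lemma get_hyp (alpha : R) (phi : R -> R) (dphi : nat -> R -> R) (W c c' : R) :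
  0 < alpha < 1 ->
  (forall x, I01 x -> dphi 0%nat x = phi x) ->
  (forall m x, (m < 4)%nat -> I01 x -> deriv_within01 (dphi m) (dphi (S m) x) x) ->
  0 < W ->
  (forall x, I01 x ->
     (2 - alpha) * (3 - alpha) * (4 - alpha) * W * Rpower x (alpha - 4) + c'
       <= Rabs (dphi 4%nat x) /\
     Rabs (dphi 4%nat x)
       <= (2 - alpha) * (3 - alpha) * (4 - alpha) * W * Rpower x (alpha - 4) + c) ->
  exists K, Hyp alpha phi dphi K.
Proof.
  intros Ha H0 Hd HW H4.
  set (A4 := (2 - alpha) * (3 - alpha) * (4 - alpha) * W).
  assert (HA4 : 0 <= A4).
  { unfold A4. repeat apply Rmult_le_pos; lra. }
  set (K4 := A4 + Rabs c).
  assert (B4 : forall x, I01 x -> Rabs (dphi 4%nat x) <= K4 * Rpower x (alpha - 4)).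
  { intros x Hx. destruct (H4 x Hx) as [_ Hb].
    assert (1 <= Rpower x (alpha - 4)) by (apply rp_ge1; [exact Hx | lra]).
    assert (c <= Rabs c) by apply Rle_abs.
    assert (Rabs c * 1 <= Rabs c * Rpower x (alpha - 4)) by (apply Rmult_le_compat_l; [apply Rabs_pos|lra]).
    unfold K4. fold A4 in Hb. lra. }
  assert (HK4 : 0 <= K4) by (unfold K4; assert (0 <= Rabs c) by apply Rabs_pos; lra).
  assert (Hd' : forall m, (m < 4)%nat -> forall t, 0 < t <= 1 -> deriv_within01 (dphi m) (dphi (S m) t) t).
  { intros m Hm t Ht. apply Hd; auto. }
  set (K3 := Rabs (dphi 3%nat 1) + K4 / (- (alpha - 3))).
  assert (B3 : forall x, I01 x -> Rabs (dphi 3%nat x) <= K3 * Rpower x (alpha - 3)).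
  { intros x Hx. unfold K3. apply (step_neg (dphi 3%nat) (dphi 4%nat) K4 (alpha - 3) ltac:(lra) ltac:(auto) (Hd' 3%nat ltac:(lia))); [|exact Hx].
    intros t Ht. replace (alpha - 3 - 1) with (alpha - 4) by ring. apply B4; auto. }
  assert (HK3 : 0 <= K3).
  { unfold K3. assert (0 <= Rabs (dphi 3%nat 1)) by apply Rabs_pos.
    assert (0 <= K4 / - (alpha - 3)) by (apply Rdiv_le_0_compat; lra). lra. }
  set (K2 := Rabs (dphi 2%nat 1) + K3 / (- (alpha - 2))).
  assert (B2 : forall x, I01 x -> Rabs (dphi 2%nat x) <= K2 * Rpower x (alpha - 2)).
  { intros x Hx. unfold K2. apply (step_neg (dphi 2%nat) (dphi 3%nat) K3 (alpha - 2) ltac:(lra) ltac:(auto) (Hd' 2%nat ltac:(lia))); [|exact Hx].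
    intros t Ht. replace (alpha - 2 - 1) with (alpha - 3) by ring. apply B3; auto. }
  assert (HK2 : 0 <= K2).
  { unfold K2. assert (0 <= Rabs (dphi 2%nat 1)) by apply Rabs_pos.
    assert (0 <= K3 / - (alpha - 2)) by (apply Rdiv_le_0_compat; lra). lra. }
  set (K1 := Rabs (dphi 1%nat 1) + K2 / (- (alpha - 1))).
  assert (B1 : forall x, I01 x -> Rabs (dphi 1%nat x) <= K1 * Rpower x (alpha - 1)).
  { intros x Hx. unfold K1. apply (step_neg (dphi 1%nat) (dphi 2%nat) K2 (alpha - 1) ltac:(lra) ltac:(auto) (Hd' 1%nat ltac:(lia))); [|exact Hx].
    intros t Ht. replace (alpha - 1 - 1) with (alpha - 2) by ring. apply B2; auto. }
  assert (HK1 : 0 <= K1).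
  { unfold K1. assert (0 <= Rabs (dphi 1%nat 1)) by apply Rabs_pos.
    assert (0 <= K2 / - (alpha - 1)) by (apply Rdiv_le_0_compat; lra). lra. }
  assert (B0 : forall y z, 0 < y -> y <= z -> z <= 1 -> Rabs (phi z - phi y) <= K1 / alpha * Rpower z alpha).
  { intros y z Hy Hyz Hz. rewrite <- (H0 z), <- (H0 y) by (unfold I01; lra).
    apply (step_pos (dphi 0%nat) (dphi 1%nat) K1 alpha ltac:(lra) ltac:(auto) (Hd' 0%nat ltac:(lia))); auto. }
  destruct (Rmax4 K1 K2 K3 (Rmax K4 (K1 / alpha))) as [K [HK [L1 [L2 [L3 L4]]]]].
  assert (L5 := Rmax_l K4 (K1 / alpha)). assert (L6 := Rmax_r K4 (K1 / alpha)).
  exists K. split; [auto | split; [auto | split; [auto | split; [auto | split]]]].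
  - intros m x Hm Hx. assert (Hp := rp_pos x (alpha - INR m)).
    destruct m as [|[|[|[|[|m]]]]]; try lia.
    + replace (INR 1) with 1 by (simpl; ring). pose proof (rp_pos x (alpha - 1)). eapply Rle_trans. apply B1; auto. apply Rmult_le_compat_r; [left; apply rp_pos | lra].
    + replace (INR 2) with 2 by (simpl; ring). pose proof (rp_pos x (alpha - 2)). eapply Rle_trans. apply B2; auto. apply Rmult_le_compat_r; [left; apply rp_pos | lra].
    + replace (INR 3) with 3 by (simpl; ring). pose proof (rp_pos x (alpha - 3)). eapply Rle_trans. apply B3; auto. apply Rmult_le_compat_r; [left; apply rp_pos | lra].
    + replace (INR 4) with 4 by (simpl; ring). pose proof (rp_pos x (alpha - 4)). eapply Rle_trans. apply B4; auto. apply Rmult_le_compat_r; [left; apply rp_pos | lra].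
  - intros y z Hy Hyz Hz. eapply Rle_trans. apply B0; auto.
    assert (Hp := rp_pos z alpha). apply Rmult_le_compat_r; [left; apply rp_pos | lra].
Qed.

Lemma eventually_small eps : 0 < eps -> exists N : nat, forall n, (N <= n)%nat -> / (INR n + 1) < eps.
Proof.
  intro He. destruct (archimed_cor1 eps He) as [N [HN HN0]].
  exists N. intros n Hn. apply Rle_lt_trans with (/ INR N); auto.
  apply Rinv_le_contravar. apply lt_0_INR; lia.
  apply le_INR in Hn. lra.
Qed.

Lemma Derive_rloc (f g : R -> R) x eps : 0 < eps ->
  (forall y, x <= y < x + eps -> f y = g y) -> Derive f x = Derive g x.
Proof.
  intros He Hfg. unfold Derive, Lim. f_equal. apply Lim_seq_ext_loc.
  destruct (eventually_small eps He) as [N HN]. exists N. intros n Hn.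
  specialize (HN n Hn). simpl.
  assert (0 < / (INR n + 1)) by (apply Rinv_0_lt_compat; assert (0 <= INR n) by apply pos_INR; lra).
  rewrite !Rplus_0_l. rewrite (Hfg x), (Hfg (x + / (INR n + 1))); auto; lra.
Qed.

Lemma Derive2_rloc (f g : R -> R) x eps : 0 < eps ->
  (forall y, x <= y < x + eps -> f y = g y) -> Derive_n f 2 x = Derive_n g 2 x.
Proof.
  intros He Hfg. simpl. apply (Derive_rloc _ _ x eps He).
  intros y Hy. apply (Derive_rloc _ _ y (x + eps - y)). lra.
  intros z Hz. apply Hfg. lra.
Qed.

Lemma Derive2_const (c x : R) : Derive_n (fun _ => c) 2 x = 0.
Proof.
  simpl. rewrite (Derive_ext _ (fun _ => 0)). apply Derive_const.
  intro t. apply Derive_const.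
Qed.

Lemma Derive2_is (f f1 f2 : R -> R) x :
  (forall y, is_derive f y (f1 y)) -> is_derive f1 x (f2 x) -> Derive_n f 2 x = f2 x.
Proof.
  intros H1 H2. simpl. rewrite (Derive_ext _ f1). apply is_derive_unique; auto.
  intro t. apply is_derive_unique; auto.
Qed.

Lemma lip_poly (f f' : R -> R) x y B :
  (forall c, Rmin x y <= c <= Rmax x y -> is_derive f c (f' c) /\ Rabs (f' c) <= B) ->
  Rabs (f x - f y) <= B * Rabs (x - y).
Proof.
  intro H. destruct (MVT_gen f y x f') as [c [Hc E]].
  - intros t Ht. apply H. rewrite Rmin_comm, Rmax_comm. lra.
  - intros t Ht. apply is_derive_cont with (f' t). apply H. rewrite Rmin_comm, Rmax_comm. lra.
  - rewrite E, Rabs_mult. rewrite Rmin_comm, Rmax_comm in Hc. apply Rmult_le_compat_r.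
    apply Rabs_pos. apply H; auto.
Qed.

Definition S0 := sabs q1 + sabs q2 + sabs q3 + sabs q4.
Definition S1 := sabs (pder q1) + sabs (pder q2) + sabs (pder q3) + sabs (pder q4).
Definition S2 := sabs (pder (pder q1)) + sabs (pder (pder q2)) + sabs (pder (pder q3)) + sabs (pder (pder q4)).

Lemma S_pos : 0 <= S0 /\ 0 <= S1 /\ 0 <= S2.
Proof.
  unfold S0, S1, S2.
  pose proof (sabs_pos q1). pose proof (sabs_pos q2). pose proof (sabs_pos q3). pose proof (sabs_pos q4).
  pose proof (sabs_pos (pder q1)). pose proof (sabs_pos (pder q2)). pose proof (sabs_pos (pder q3)). pose proof (sabs_pos (pder q4)).
  pose proof (sabs_pos (pder (pder q1))). pose proof (sabs_pos (pder (pder q2))).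
  pose proof (sabs_pos (pder (pder q3))). pose proof (sabs_pos (pder (pder q4))).
  repeat split; lra.
Qed.

Lemma rp_nat_plus Dl a (m : nat) : 0 < Dl -> Rpower Dl (a - INR m) * Dl ^ m = Rpower Dl a.
Proof.
  intro HD. rewrite <- Rpower_pow by auto. rewrite <- Rpower_plus. f_equal. ring.
Qed.

Lemma Gb_scale l1 l2 l3 l4 ds s Dl K a : 0 < Dl -> Rabs s <= Dl -> 0 <= K ->
  (forall m, (1 <= m <= 4)%nat -> Rabs (ds m) <= K * Rpower Dl (a - INR m)) ->
  Gb l1 l2 l3 l4 ds s <= K * (sabs l1 + sabs l2 + sabs l3 + sabs l4) * Rpower Dl a.
Proof.
  intros HD Hs HK Hds. unfold Gb.
  assert (T : forall m l, (1 <= m <= 4)%nat ->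
     Rabs (ds m) * Rabs s ^ m * sabs l <= K * sabs l * Rpower Dl a).
  { intros m l Hm. rewrite <- (rp_nat_plus Dl a m HD).
    assert (0 <= sabs l) by apply sabs_pos.
    assert (0 <= Rabs s ^ m) by (apply pow_le, Rabs_pos).
    assert (Rabs s ^ m <= Dl ^ m) by (apply pow_incr; split; [apply Rabs_pos | auto]).
    assert (0 <= Rabs (ds m)) by apply Rabs_pos.
    specialize (Hds m Hm).
    assert (0 < Rpower Dl (a - INR m)) by apply rp_pos.
    apply Rle_trans with (K * Rpower Dl (a - INR m) * Dl ^ m * sabs l).
    - apply Rmult_le_compat_r; auto. apply Rmult_le_compat; auto.
    - right; ring. }
  assert (T1 := T 1%nat l1 ltac:(lia)). rewrite pow_1 in T1.
  assert (T2 := T 2%nat l2 ltac:(lia)). assert (T3 := T 3%nat l3 ltac:(lia)). assert (T4 := T 4%nat l4 ltac:(lia)).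
  lra.
Qed.

Definition ds (dphi : nat -> R -> R) (a : R) : nat -> R := fun m => dphi m a.
Definition HP (phi : R -> R) (dphi : nat -> R -> R) (a s x : R) : R :=
  phi a + G q1 q2 q3 q4 (ds dphi a) s ((x - a) / s).
Definition HP1 (dphi : nat -> R -> R) (a s x : R) : R :=
  G (pder q1) (pder q2) (pder q3) (pder q4) (ds dphi a) s ((x - a) / s) / s.
Definition HP2 (dphi : nat -> R -> R) (a s x : R) : R :=
  G (pder (pder q1)) (pder (pder q2)) (pder (pder q3)) (pder (pder q4)) (ds dphi a) s ((x - a) / s) / s / s.

Lemma H_HP phi dphi a b x : b <> a -> H 4 phi dphi a b x = HP phi dphi a (b - a) x.
Proof.
  intro Hab. assert (Hs : b - a <> 0) by lra.
  replace (H 4 phi dphi a b x) with (H 4 phi dphi a (a + (b - a)) (a + (b - a) * ((x - a) / (b - a)))).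
  2:{ f_equal. ring. field; auto. }
  rewrite H_eq by auto. unfold HP, G, ds. ring.
Qed.

Lemma HP_derive phi dphi a s x : s <> 0 -> is_derive (HP phi dphi a s) x (HP1 dphi a s x).
Proof.
  intro Hs. unfold HP, HP1. eapply dext. apply dplus. apply (dconst (phi a)).
  apply (G_derive q1 q2 q3 q4 (ds dphi a) a s x Hs).
  intro; reflexivity. cbv beta. ring.
Qed.

Lemma HP1_derive dphi a s x : s <> 0 -> is_derive (HP1 dphi a s) x (HP2 dphi a s x).
Proof.
  intro Hs. unfold HP1, HP2. eapply dext. apply dmult.
  apply (G_derive (pder q1) (pder q2) (pder q3) (pder q4) (ds dphi a) a s x Hs). apply (dconst (/ s)).
  intro; reflexivity. cbv beta. field; auto.
Qed.

Lemma peval0 l : peval (0 :: l) 0 = 0.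
Proof. simpl. ring. Qed.

Lemma HP_at_a phi dphi a s : s <> 0 -> HP phi dphi a s a = phi a.
Proof.
  intro Hs. unfold HP. replace ((a - a) / s) with 0 by (field; auto).
  unfold G, q1, q2, q3, q4. rewrite !peval0. ring.
Qed.


Lemma P_low phi dphi Dl x : 0 < Dl -> x <= Dl / 2 ->
  phibar phi dphi Dl x = HP phi dphi Dl (Dl / 2 - Dl) (Dl / 2).
Proof.
  intros HD Hx. unfold phibar. destruct (Rle_dec x (Dl / 2)); [|lra]. apply H_HP. lra.
Qed.

Lemma P_mid phi dphi Dl x : 0 < Dl -> Dl / 2 <= x < Dl ->
  phibar phi dphi Dl x = HP phi dphi Dl (Dl / 2 - Dl) x.
Proof.
  intros HD Hx. unfold phibar. destruct (Rle_dec x (Dl / 2)).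
  - replace x with (Dl / 2) by lra. apply H_HP. lra.
  - destruct (Rlt_dec x Dl); [|lra]. apply H_HP. lra.
Qed.

Lemma P_phi phi dphi Dl x : 0 < Dl -> Dl <= x <= 1 -> phibar phi dphi Dl x = phi x.
Proof.
  intros HD Hx. unfold phibar. destruct (Rle_dec x (Dl / 2)); [lra|].
  destruct (Rlt_dec x Dl); [lra|]. destruct (Rle_dec x 1); [auto|lra].
Qed.

Lemma P_up phi dphi Dl x : 0 < Dl <= 1 -> 1 <= x < 2 -> phibar phi dphi Dl x = HP phi dphi 1 1 x.
Proof.
  intros HD Hx. unfold phibar. destruct (Rle_dec x (Dl / 2)); [lra|].
  destruct (Rlt_dec x Dl); [lra|]. destruct (Rle_dec x 1).
  - replace x with 1 by lra. rewrite HP_at_a by apply R1_neq_R0. reflexivity.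
  - destruct (Rlt_dec x 2); [|lra]. rewrite H_HP by lra. f_equal. ring.
Qed.

Lemma P_top phi dphi Dl x : 0 < Dl <= 1 -> 2 <= x -> phibar phi dphi Dl x = HP phi dphi 1 1 2.
Proof.
  intros HD Hx. unfold phibar. destruct (Rle_dec x (Dl / 2)); [lra|].
  destruct (Rlt_dec x Dl); [lra|]. destruct (Rle_dec x 1); [lra|].
  destruct (Rlt_dec x 2); [lra|]. rewrite H_HP by lra. f_equal. ring.
Qed.

Lemma P2_low phi dphi Dl x : 0 < Dl -> x < Dl / 2 -> phibar2 phi dphi Dl x = 0.
Proof.
  intros HD Hx. unfold phibar2.
  rewrite (Derive2_rloc _ (fun _ => HP phi dphi Dl (Dl / 2 - Dl) (Dl / 2)) x (Dl / 2 - x)).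
  apply Derive2_const. lra. intros y Hy. apply P_low; lra.
Qed.

Lemma P2_mid phi dphi Dl x : 0 < Dl -> Dl / 2 <= x < Dl ->
  phibar2 phi dphi Dl x = HP2 dphi Dl (Dl / 2 - Dl) x.
Proof.
  intros HD Hx. unfold phibar2.
  rewrite (Derive2_rloc _ (HP phi dphi Dl (Dl / 2 - Dl)) x (Dl - x)).
  apply (Derive2_is _ (HP1 dphi Dl (Dl / 2 - Dl)) (HP2 dphi Dl (Dl / 2 - Dl))).
  intro y. apply HP_derive. intro; lra. apply HP1_derive. intro; lra.
  lra. intros y Hy. apply P_mid; lra.
Qed.

Lemma P2_up phi dphi Dl x : 0 < Dl <= 1 -> 1 <= x < 2 -> phibar2 phi dphi Dl x = HP2 dphi 1 1 x.
Proof.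
  intros HD Hx. unfold phibar2.
  rewrite (Derive2_rloc _ (HP phi dphi 1 1) x (2 - x)).
  apply (Derive2_is _ (HP1 dphi 1 1) (HP2 dphi 1 1)).
  intro y. apply HP_derive. intro; lra. apply HP1_derive. intro; lra.
  lra. intros y Hy. apply P_up; lra.
Qed.

Lemma P2_top phi dphi Dl x : 0 < Dl <= 1 -> 2 <= x -> phibar2 phi dphi Dl x = 0.
Proof.
  intros HD Hx. unfold phibar2.
  rewrite (Derive2_rloc _ (fun _ => HP phi dphi 1 1 2) x 1).
  apply Derive2_const. lra. intros y Hy. apply P_top; lra.
Qed.

Lemma P2_phi alpha phi dphi K Dl x : Hyp alpha phi dphi K -> 0 < Dl -> Dl <= x < 1 ->
  phibar2 phi dphi Dl x = dphi 2%nat x.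
Proof.
  intros [Ha [HK [H0 [Hd _]]]] HD Hx. unfold phibar2.
  rewrite (Derive2_rloc _ (dphi 0%nat) x (1 - x)).
  2: lra.
  2:{ intros y Hy. rewrite P_phi by lra. symmetry. apply H0. unfold I01; lra. }
  simpl. rewrite (Derive_rloc _ (dphi 1%nat) x (1 - x)). 2: lra.
  - apply is_derive_unique. apply dw_is_derive. lra. apply Hd. lia. unfold I01; lra.
  - intros y Hy. apply is_derive_unique. apply dw_is_derive. lra. apply Hd. lia. unfold I01; lra.
Qed.

Lemma rp_m1 Dl a : 0 < Dl -> Rpower Dl (a - 1) = Rpower Dl a / Dl.
Proof.
  intro HD. unfold Rminus. rewrite Rpower_plus, Rpower_Ropp, Rpower_1 by auto. reflexivity.
Qed.

Lemma rp_m2 Dl a : 0 < Dl -> Rpower Dl (a - 2) = Rpower Dl a / Dl / Dl.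
Proof.
  intro HD. replace (a - 2) with ((a - 1) - 1) by ring. rewrite !rp_m1; auto.
Qed.

Lemma HPD_bounds alpha phi dphi K Dl x : Hyp alpha phi dphi K -> 0 < Dl <= 1 -> Dl / 2 <= x <= Dl ->
  Rabs (HP phi dphi Dl (Dl / 2 - Dl) x - phi Dl) <= K * S0 * Rpower Dl alpha /\
  Rabs (HP1 dphi Dl (Dl / 2 - Dl) x) <= 2 * K * S1 * Rpower Dl (alpha - 1) /\
  Rabs (HP2 dphi Dl (Dl / 2 - Dl) x) <= 4 * K * S2 * Rpower Dl (alpha - 2).
Proof.
  intros HH HD Hx. destruct HH as [Ha [HK [H0 [Hd [Hb Hphi]]]]].
  assert (Hs : Rabs (Dl / 2 - Dl) = Dl / 2) by (rewrite Rabs_left by lra; field).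
  assert (Ht : Rabs ((x - Dl) / (Dl / 2 - Dl)) <= 1).
  { rewrite Rabs_div by lra. rewrite Hs. apply Rmult_le_reg_r with (Dl / 2). lra.
    unfold Rdiv at 1. rewrite Rmult_assoc, Rinv_l, Rmult_1_r by lra.
    rewrite Rabs_left1 by lra. lra. }
  assert (Hds : forall m, (1 <= m <= 4)%nat -> Rabs (ds dphi Dl m) <= K * Rpower Dl (alpha - INR m)).
  { intros m Hm. apply Hb; auto; unfold I01; lra. }
  assert (HsD : Rabs (Dl / 2 - Dl) <= Dl) by lra.
  assert (G0 := Gb_scale q1 q2 q3 q4 _ _ Dl K alpha (proj1 HD) HsD HK Hds).
  assert (G1 := Gb_scale (pder q1) (pder q2) (pder q3) (pder q4) _ _ Dl K alpha (proj1 HD) HsD HK Hds).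
  assert (G2 := Gb_scale (pder (pder q1)) (pder (pder q2)) (pder (pder q3)) (pder (pder q4)) _ _ Dl K alpha (proj1 HD) HsD HK Hds).
  fold S0 in G0. fold S1 in G1. fold S2 in G2.
  assert (B0 := G_bound q1 q2 q3 q4 (ds dphi Dl) (Dl / 2 - Dl) _ Ht).
  assert (B1 := G_bound (pder q1) (pder q2) (pder q3) (pder q4) (ds dphi Dl) (Dl / 2 - Dl) _ Ht).
  assert (B2 := G_bound (pder (pder q1)) (pder (pder q2)) (pder (pder q3)) (pder (pder q4)) (ds dphi Dl) (Dl / 2 - Dl) _ Ht).
  rewrite rp_m1, rp_m2 by lra.
  unfold HP, HP1, HP2. split; [|split].
  - replace (phi Dl + G q1 q2 q3 q4 (ds dphi Dl) (Dl / 2 - Dl) ((x - Dl) / (Dl / 2 - Dl)) - phi Dl)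
      with (G q1 q2 q3 q4 (ds dphi Dl) (Dl / 2 - Dl) ((x - Dl) / (Dl / 2 - Dl))) by ring. lra.
  - rewrite Rabs_div by lra. rewrite Hs.
    apply Rle_trans with (K * S1 * Rpower Dl alpha / (Dl / 2)).
    + unfold Rdiv. apply Rmult_le_compat_r. left; apply Rinv_0_lt_compat; lra. lra.
    + right. field. lra.
  - rewrite !Rabs_div by lra. rewrite Hs.
    apply Rle_trans with (K * S2 * Rpower Dl alpha / (Dl / 2) / (Dl / 2)).
    + unfold Rdiv. apply Rmult_le_compat_r. left; apply Rinv_0_lt_compat; lra.
      apply Rmult_le_compat_r. left; apply Rinv_0_lt_compat; lra. lra.
    + right. field. lra.
Qed.

Lemma HP1_bounds alpha phi dphi K x : Hyp alpha phi dphi K -> 1 <= x <= 2 ->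
  Rabs (HP phi dphi 1 1 x - phi 1) <= K * S0 /\
  Rabs (HP1 dphi 1 1 x) <= K * S1 /\
  Rabs (HP2 dphi 1 1 x) <= K * S2.
Proof.
  intros HH Hx. destruct HH as [Ha [HK [H0 [Hd [Hb Hphi]]]]].
  assert (Ht : Rabs ((x - 1) / 1) <= 1).
  { replace ((x - 1) / 1) with (x - 1) by field. rewrite Rabs_pos_eq; lra. }
  assert (Hds : forall m, (1 <= m <= 4)%nat -> Rabs (ds dphi 1 m) <= K * Rpower 1 (alpha - INR m)).
  { intros m Hm. apply Hb; auto; unfold I01; lra. }
  assert (Hs1 : Rabs 1 <= 1) by (rewrite Rabs_R1; lra).
  assert (G0 := Gb_scale q1 q2 q3 q4 _ _ 1 K alpha Rlt_0_1 Hs1 HK Hds).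
  assert (G1 := Gb_scale (pder q1) (pder q2) (pder q3) (pder q4) _ _ 1 K alpha Rlt_0_1 Hs1 HK Hds).
  assert (G2 := Gb_scale (pder (pder q1)) (pder (pder q2)) (pder (pder q3)) (pder (pder q4)) _ _ 1 K alpha Rlt_0_1 Hs1 HK Hds).
  fold S0 in G0. fold S1 in G1. fold S2 in G2. rewrite rp_one, Rmult_1_r in G0, G1, G2.
  assert (B0 := G_bound q1 q2 q3 q4 (ds dphi 1) 1 _ Ht).
  assert (B1 := G_bound (pder q1) (pder q2) (pder q3) (pder q4) (ds dphi 1) 1 _ Ht).
  assert (B2 := G_bound (pder (pder q1)) (pder (pder q2)) (pder (pder q3)) (pder (pder q4)) (ds dphi 1) 1 _ Ht).
  unfold HP, HP1, HP2. rewrite !Rdiv_1_r. rewrite !Rdiv_1_r in B0, B1, B2. split; [|split].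
  - replace (phi 1 + G q1 q2 q3 q4 (ds dphi 1) 1 (x - 1) - phi 1)
      with (G q1 q2 q3 q4 (ds dphi 1) 1 (x - 1)) by ring. lra.
  - lra.
  - lra.
Qed.

Lemma rp_half p a : 0 < p -> -1 <= a <= 0 -> Rpower (p / 2) a <= 2 * Rpower p a.
Proof.
  intros Hp Ha. unfold Rdiv. rewrite <- Rpower_mult_distr by lra.
  assert (E : Rpower 2 a * Rpower (/ 2) a = 1).
  { rewrite Rpower_mult_distr by lra. replace (2 * / 2) with 1 by field. apply rp_one. }
  assert (E2 : Rpower (/ 2) a = Rpower 2 (- a)).
  { rewrite Rpower_Ropp. assert (0 < Rpower 2 a) by apply rp_pos.
    apply Rmult_eq_reg_l with (Rpower 2 a). rewrite E. field. lra. lra. }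
  rewrite E2. assert (Rpower 2 (- a) <= Rpower 2 1) by (apply Rle_Rpower; lra).
  rewrite Rpower_1 in H by lra. assert (0 < Rpower p a) by apply rp_pos. nra.
Qed.

Lemma rp_xm2 x a : 0 < x -> x * Rpower x (a - 2) = Rpower x (a - 1).
Proof.
  intro Hx. replace (a - 2) with ((a - 1) - 1) by ring. rewrite rp_m1 by auto. field. lra.
Qed.

Lemma rp_ge_half alpha p t : 0 < alpha < 1 -> 0 < p -> p / 2 <= t ->
  Rpower t (alpha - 1) <= 2 * Rpower p (alpha - 1).
Proof.
  intros Ha Hp Ht. apply Rle_trans with (Rpower (p / 2) (alpha - 1)).
  apply rp_anti; lra. apply rp_half; lra.
Qed.

Lemma Hyp_d1 alpha phi dphi K t : Hyp alpha phi dphi K -> 0 < t <= 1 ->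
  Rabs (dphi 1%nat t) <= K * Rpower t (alpha - 1).
Proof.
  intros HH Ht. destruct HH as [Ha [HK [H0 [Hd [Hb Hphi]]]]].
  replace (alpha - 1) with (alpha - INR 1) by (simpl; ring). apply Hb; auto.
Qed.

Lemma Hyp_d2 alpha phi dphi K t : Hyp alpha phi dphi K -> 0 < t <= 1 ->
  Rabs (dphi 2%nat t) <= K * Rpower t (alpha - 2).
Proof.
  intros HH Ht. destruct HH as [Ha [HK [H0 [Hd [Hb Hphi]]]]].
  replace (alpha - 2) with (alpha - INR 2) by (simpl; ring). apply Hb; auto.
Qed.

Lemma phi_lip alpha phi dphi K y z L : Hyp alpha phi dphi K -> 0 < y -> y <= z -> z <= 1 ->
  (forall t, y <= t < z -> K * Rpower t (alpha - 1) <= L) -> Rabs (phi z - phi y) <= L * (z - y).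
Proof.
  intros HH Hy Hyz Hz HL. assert (HH' := HH). destruct HH' as [Ha [HK [H0 [Hd [Hb Hphi]]]]].
  rewrite <- (H0 z), <- (H0 y) by (unfold I01; lra).
  apply (lip (dphi 0%nat) (dphi 1%nat)); auto.
  intros t Ht. apply Hd. lia. auto.
  intros t Ht. apply Rle_trans with (K * Rpower t (alpha - 1)); [apply (Hyp_d1 _ _ _ _ t HH); lra | apply HL; auto].
Qed.

Lemma HP_lip_D alpha phi dphi K Dl x y : Hyp alpha phi dphi K -> 0 < Dl <= 1 ->
  Dl / 2 <= x <= Dl -> Dl / 2 <= y <= Dl ->
  Rabs (HP phi dphi Dl (Dl / 2 - Dl) x - HP phi dphi Dl (Dl / 2 - Dl) y)
    <= 2 * K * S1 * Rpower Dl (alpha - 1) * Rabs (x - y).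
Proof.
  intros HH HD Hx Hy. apply (lip_poly _ (HP1 dphi Dl (Dl / 2 - Dl))).
  intros c Hc. assert (Hm1 := Rmin_r x y). assert (Hm2 := Rmin_l x y).
  assert (Hm3 := Rmax_r x y). assert (Hm4 := Rmax_l x y).
  assert (Dl / 2 <= Rmin x y) by (apply Rmin_glb; lra). assert (Rmax x y <= Dl) by (apply Rmax_lub; lra).
  split. apply HP_derive. intro; lra. apply (HPD_bounds _ _ _ _ Dl c HH HD). lra.
Qed.

Lemma HP_lip_1 alpha phi dphi K x y : Hyp alpha phi dphi K ->
  1 <= x <= 2 -> 1 <= y <= 2 ->
  Rabs (HP phi dphi 1 1 x - HP phi dphi 1 1 y) <= K * S1 * Rabs (x - y).
Proof.
  intros HH Hx Hy. apply (lip_poly _ (HP1 dphi 1 1)).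
  intros c Hc. assert (Hm1 := Rmin_r x y). assert (Hm2 := Rmin_l x y).
  assert (Hm3 := Rmax_r x y). assert (Hm4 := Rmax_l x y).
  assert (1 <= Rmin x y) by (apply Rmin_glb; lra). assert (Rmax x y <= 2) by (apply Rmax_lub; lra).
  split. apply HP_derive. intro; lra. apply (HP1_bounds _ _ _ _ c HH). lra.
Qed.

Lemma U_big alpha phi dphi K Dl p x : Hyp alpha phi dphi K -> 0 < Dl -> Dl < p -> p <= 1 -> p / 2 <= x ->
  Rabs (phibar phi dphi Dl x - phi p) <= (5 * K * S1 + 4 * K) * Rpower p (alpha - 1) * Rabs (x - p).
Proof.
  intros HH HD HDp Hp Hx. assert (HH' := HH). destruct HH' as [Ha [HK [H0 [Hd [Hb Hphi]]]]].
  destruct S_pos as [HS0 [HS1 HS2]].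
  set (r := Rpower p (alpha - 1)).
  assert (Hr1 : 1 <= r) by (apply rp_ge1; lra).
  assert (Hhalf : forall t, p / 2 <= t -> K * Rpower t (alpha - 1) <= 2 * K * r).
  { intros t Ht. assert (Rpower t (alpha - 1) <= 2 * r) by (apply rp_ge_half; lra). nra. }
  assert (HKS1 : 0 <= K * S1) by nra.
  assert (HL : 0 <= 5 * K * S1 + 4 * K) by nra.
  destruct (Rlt_le_dec x Dl) as [Hx1 | Hx1].
  -
    rewrite P_mid by lra.
    assert (A := HP_lip_D _ _ _ _ Dl x Dl HH (conj HD (Rlt_le _ _ (Rlt_le_trans _ _ _ HDp Hp))) ltac:(lra) ltac:(lra)).
    rewrite HP_at_a in A by (intro; lra).
    assert (B := phi_lip _ _ _ _ Dl p (2 * K * r) HH HD (Rlt_le _ _ HDp) Hp ltac:(intros t Ht; apply Hhalf; lra)).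
    assert (RD : Rpower Dl (alpha - 1) <= 2 * r) by (apply rp_ge_half; lra).
    rewrite (Rabs_left1 (x - Dl)) in A by lra. rewrite (Rabs_left1 (x - p)) by lra.
    assert (A' : Rabs (HP phi dphi Dl (Dl / 2 - Dl) x - phi Dl) <= 4 * K * S1 * r * (Dl - x)).
    { eapply Rle_trans. apply A. replace (- (x - Dl)) with (Dl - x) by ring.
      assert (0 <= Dl - x) by lra.
      apply Rmult_le_compat_r; auto. replace (4 * K * S1 * r) with (2 * K * S1 * (2 * r)) by ring.
      apply Rmult_le_compat_l; auto. lra. }
    replace (HP phi dphi Dl (Dl / 2 - Dl) x - phi p)
      with ((HP phi dphi Dl (Dl / 2 - Dl) x - phi Dl) - (phi p - phi Dl)) by ring.
    eapply Rle_trans. apply Rabs_triang. rewrite Rabs_Ropp.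
    assert (K * S1 * r * (Dl - x) >= 0) by (apply Rle_ge; apply Rmult_le_pos; [nra | lra]).
    assert (K * r * (p - Dl) >= 0) by (apply Rle_ge; apply Rmult_le_pos; [nra | lra]).
    assert (K * S1 * r * (p - x) >= K * S1 * r * (Dl - x)) by (apply Rle_ge, Rmult_le_compat_l; [nra | lra]).
    assert (K * r * (p - x) >= K * r * (p - Dl)) by (apply Rle_ge, Rmult_le_compat_l; [nra | lra]).
    replace ((5 * K * S1 + 4 * K) * r * - (x - p)) with (5 * (K * S1 * r * (p - x)) + 4 * (K * r * (p - x))) by ring.
    lra.
  - destruct (Rle_lt_dec x 1) as [Hx2 | Hx2].
    + rewrite P_phi by lra.
      assert (M : Rabs (phi x - phi p) <= 2 * K * r * Rabs (x - p)).
      { destruct (Rle_lt_dec x p) as [Hxp | Hxp].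
        - rewrite Rabs_minus_sym, (Rabs_minus_sym x p), (Rabs_pos_eq (p - x)) by lra.
          apply (phi_lip alpha phi dphi K x p (2 * K * r) HH); try lra. intros t Ht; apply Hhalf; lra.
        - rewrite (Rabs_pos_eq (x - p)) by lra.
          apply (phi_lip alpha phi dphi K p x (2 * K * r) HH); try lra. intros t Ht; apply Hhalf; lra. }
      eapply Rle_trans. apply M. apply Rmult_le_compat_r. apply Rabs_pos.
      assert (0 <= K * S1 * r) by nra. nra.
    + assert (B := phi_lip _ _ _ _ p 1 (2 * K * r) HH ltac:(lra) Hp (Rle_refl 1) ltac:(intros t Ht; apply Hhalf; lra)).
      rewrite (Rabs_pos_eq (x - p)) by lra.
      assert (A : Rabs (phibar phi dphi Dl x - phi 1) <= K * S1 * (x - 1)).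
      { destruct (Rlt_le_dec x 2) as [Hx3 | Hx3].
        - rewrite P_up by lra. rewrite <- (HP_at_a phi dphi 1 1) by (intro; lra).
          eapply Rle_trans. apply (HP_lip_1 _ _ _ _ x 1 HH); lra.
          rewrite Rabs_pos_eq by lra. lra.
        - rewrite P_top by lra. rewrite <- (HP_at_a phi dphi 1 1) by (intro; lra).
          eapply Rle_trans. apply (HP_lip_1 _ _ _ _ 2 1 HH); lra.
          rewrite Rabs_pos_eq by lra. apply Rmult_le_compat_l; lra. }
      replace (phibar phi dphi Dl x - phi p) with ((phibar phi dphi Dl x - phi 1) + (phi 1 - phi p)) by ring.
      eapply Rle_trans. apply Rabs_triang.
      assert (K * S1 * (x - 1) <= K * S1 * r * (x - p)).
      { replace (K * S1 * r * (x - p)) with (K * S1 * (r * (x - p))) by ring.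
        apply Rmult_le_compat_l; auto. nra. }
      assert (K * r * (1 - p) <= K * r * (x - p)) by (apply Rmult_le_compat_l; nra).
      assert (0 <= K * S1 * r * (x - p)) by (apply Rmult_le_pos; nra).
      assert (0 <= K * r * (x - p)) by (apply Rmult_le_pos; nra).
      replace ((5 * K * S1 + 4 * K) * r * (x - p)) with (5 * (K * S1 * r * (x - p)) + 4 * (K * r * (x - p))) by ring.
      lra.
Qed.

Lemma U_small alpha phi dphi K Dl p x : Hyp alpha phi dphi K -> 0 < Dl -> Dl < p -> p <= 1 -> 0 <= x < p / 2 ->
  Rabs (phibar phi dphi Dl x - phi p) <= (K * S0 + K) * Rpower p alpha.
Proof.
  intros HH HD HDp Hp Hx. assert (HH' := HH). destruct HH' as [Ha [HK [H0 [Hd [Hb Hphi]]]]].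
  destruct S_pos as [HS0 [HS1 HS2]].
  assert (Hpa : 0 < Rpower p alpha) by apply rp_pos.
  assert (HDa : Rpower Dl alpha <= Rpower p alpha) by (apply rp_mono; lra).
  destruct (Rlt_le_dec x Dl) as [Hx1 | Hx1].
  - assert (A : Rabs (phibar phi dphi Dl x - phi Dl) <= K * S0 * Rpower p alpha).
    { destruct (Rle_lt_dec x (Dl / 2)).
      - rewrite P_low by lra. eapply Rle_trans.
        apply (HPD_bounds _ _ _ _ Dl (Dl / 2) HH); lra. apply Rmult_le_compat_l; nra.
      - rewrite P_mid by lra. eapply Rle_trans.
        apply (HPD_bounds _ _ _ _ Dl x HH); lra. apply Rmult_le_compat_l; nra. }
    assert (B := Hphi Dl p HD (Rlt_le _ _ HDp) Hp).
    replace (phibar phi dphi Dl x - phi p) with ((phibar phi dphi Dl x - phi Dl) - (phi p - phi Dl)) by ring.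
    eapply Rle_trans. apply Rabs_triang. rewrite Rabs_Ropp. lra.
  - rewrite P_phi by lra. rewrite Rabs_minus_sym. assert (x > 0) by lra.
    assert (B := Hphi x p ltac:(lra) ltac:(lra) Hp).
    assert (0 <= K * S0 * Rpower p alpha) by (apply Rmult_le_pos; nra). lra.
Qed.

Lemma V_big alpha phi dphi K Dl p x : Hyp alpha phi dphi K -> 0 < Dl -> Dl < p -> p <= 1 -> p / 2 <= x ->
  Rabs (x * phibar2 phi dphi Dl x) <= (8 * K * S2 + 2 * K) * Rpower p (alpha - 1).
Proof.
  intros HH HD HDp Hp Hx. assert (HH' := HH). destruct HH' as [Ha [HK [H0 [Hd [Hb Hphi]]]]].
  destruct S_pos as [HS0 [HS1 HS2]].
  set (r := Rpower p (alpha - 1)).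
  assert (Hr1 : 1 <= r) by (apply rp_ge1; lra).
  assert (HKS : 0 <= K * S2) by nra.
  assert (0 < x) by lra. rewrite Rabs_mult, (Rabs_pos_eq x) by lra.
  destruct (Rlt_le_dec x Dl) as [Hx1 | Hx1].
  - rewrite P2_mid by lra.
    assert (A := proj2 (proj2 (HPD_bounds _ _ _ _ Dl x HH ltac:(lra) ltac:(lra)))).
    assert (RD : Rpower Dl (alpha - 1) <= 2 * r) by (apply rp_ge_half; lra).
    assert (E := rp_xm2 Dl alpha HD).
    assert (0 < Rpower Dl (alpha - 2)) by apply rp_pos.
    apply Rle_trans with (Dl * (4 * K * S2 * Rpower Dl (alpha - 2))).
    apply Rmult_le_compat; try lra. apply Rabs_pos.
    replace (Dl * (4 * K * S2 * Rpower Dl (alpha - 2))) with (4 * K * S2 * (Dl * Rpower Dl (alpha - 2))) by ring.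
    rewrite E. nra.
  - destruct (Rlt_le_dec x 1) as [Hx2 | Hx2].
    + rewrite (P2_phi _ _ _ _ Dl x HH) by lra.
      assert (A := Hyp_d2 _ _ _ _ x HH ltac:(lra)).
      assert (E := rp_xm2 x alpha ltac:(lra)).
      assert (Rpower x (alpha - 1) <= 2 * r) by (apply rp_ge_half; lra).
      apply Rle_trans with (x * (K * Rpower x (alpha - 2))).
      apply Rmult_le_compat_l; lra.
      replace (x * (K * Rpower x (alpha - 2))) with (K * (x * Rpower x (alpha - 2))) by ring.
      rewrite E. nra.
    + destruct (Rlt_le_dec x 2) as [Hx3 | Hx3].
      * rewrite P2_up by lra.
        assert (A := proj2 (proj2 (HP1_bounds _ _ _ _ x HH ltac:(lra)))).
        apply Rle_trans with (2 * (K * S2)). apply Rmult_le_compat; try lra. apply Rabs_pos. nra.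
      * rewrite P2_top by lra. rewrite Rabs_R0, Rmult_0_r. nra.
Qed.

Lemma V_small alpha phi dphi K Dl p x : Hyp alpha phi dphi K -> 0 < Dl -> Dl < p -> p <= 1 -> 0 <= x < p / 2 ->
  Rabs (x * phibar2 phi dphi Dl x) <= (8 * K * S2 + 2 * K) * Rpower Dl (alpha - 1).
Proof.
  intros HH HD HDp Hp Hx. assert (HH' := HH). destruct HH' as [Ha [HK [H0 [Hd [Hb Hphi]]]]].
  destruct S_pos as [HS0 [HS1 HS2]].
  assert (HKS : 0 <= K * S2) by nra.
  assert (HrD : 0 < Rpower Dl (alpha - 1)) by apply rp_pos.
  rewrite Rabs_mult, (Rabs_pos_eq x) by lra.
  destruct (Rlt_le_dec x (Dl / 2)) as [Hx0 | Hx0].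
  - rewrite P2_low by lra. rewrite Rabs_R0, Rmult_0_r. nra.
  - destruct (Rlt_le_dec x Dl) as [Hx1 | Hx1].
    + rewrite P2_mid by lra.
      assert (A := proj2 (proj2 (HPD_bounds _ _ _ _ Dl x HH ltac:(lra) ltac:(lra)))).
      assert (E := rp_xm2 Dl alpha HD).
      assert (0 < Rpower Dl (alpha - 2)) by apply rp_pos.
      apply Rle_trans with (Dl * (4 * K * S2 * Rpower Dl (alpha - 2))).
      apply Rmult_le_compat; try lra. apply Rabs_pos.
      replace (Dl * (4 * K * S2 * Rpower Dl (alpha - 2))) with (4 * K * S2 * (Dl * Rpower Dl (alpha - 2))) by ring.
      rewrite E. nra.
    + rewrite (P2_phi _ _ _ _ Dl x HH) by lra.
      assert (A := Hyp_d2 _ _ _ _ x HH ltac:(lra)).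
      assert (E := rp_xm2 x alpha ltac:(lra)).
      assert (Rpower x (alpha - 1) <= Rpower Dl (alpha - 1)) by (apply rp_anti; lra).
      apply Rle_trans with (x * (K * Rpower x (alpha - 2))).
      apply Rmult_le_compat_l; lra.
      replace (x * (K * Rpower x (alpha - 2))) with (K * (x * Rpower x (alpha - 2))) by ring.
      rewrite E. nra.
Qed.

Lemma W_bound alpha phi dphi K p : Hyp alpha phi dphi K -> 0 < p <= 1 ->
  Rabs (p * dphi 2%nat p) <= K * Rpower p (alpha - 1).
Proof.
  intros HH Hp. rewrite Rabs_mult, Rabs_pos_eq by lra.
  assert (A := Hyp_d2 _ _ _ _ p HH Hp). rewrite <- (rp_xm2 p alpha) by lra.
  assert (0 < Rpower p (alpha - 2)) by apply rp_pos.
  destruct HH as [Ha [HK _]]. nra.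
Qed.

Lemma exp_pow u m : exp u ^ m = exp (INR m * u).
Proof.
  induction m. simpl. rewrite Rmult_0_l, exp_0. reflexivity.
  rewrite S_INR. simpl. rewrite IHm, <- exp_plus. f_equal. ring.
Qed.

Lemma exp_pow_bound (c y : R) (m : nat) : 0 < c -> 0 <= y -> (0 < m)%nat ->
  y ^ m * exp (- (c * y)) <= (INR m / c) ^ m.
Proof.
  intros Hc Hy Hm.
  assert (HM : 0 < INR m) by (apply lt_0_INR; lia).
  set (u := c * y / INR m).
  assert (Hu : 0 <= u) by (unfold u; apply Rmult_le_pos; [nra | left; apply Rinv_0_lt_compat; lra]).
  assert (E1 : u <= exp u).
  { destruct (Req_dec u 0) as [E|E]. rewrite E, exp_0; lra.
    assert (H := exp_ineq1 u E). lra. }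
  assert (E2 : exp u ^ m = exp (c * y)).
  { rewrite exp_pow. f_equal. unfold u. field. lra. }
  assert (E3 : u ^ m <= exp (c * y)) by (rewrite <- E2; apply pow_incr; lra).
  assert (E4 : y = INR m / c * u) by (unfold u; field; lra).
  assert (0 < (INR m / c) ^ m) by (apply pow_lt; apply Rdiv_lt_0_compat; lra).
  assert (Y : y ^ m <= (INR m / c) ^ m * exp (c * y)).
  { rewrite E4 at 1. rewrite Rpow_mult_distr. apply Rmult_le_compat_l; lra. }
  apply Rle_trans with ((INR m / c) ^ m * exp (c * y) * exp (- (c * y))).
  apply Rmult_le_compat_r; [left; apply exp_pos | exact Y].
  right. rewrite Rmult_assoc, <- exp_plus. replace (c * y + - (c * y)) with 0 by ring. rewrite exp_0. ring.
Qed.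

Lemma sq3 a b c : (a + b + c) ^ 2 <= 3 * (a ^ 2 + b ^ 2 + c ^ 2).
Proof.
  assert (H : 0 <= (a - b) ^ 2 + (b - c) ^ 2 + (a - c) ^ 2)
    by (repeat apply Rplus_le_le_0_compat; apply pow2_ge_0).
  replace (3 * (a ^ 2 + b ^ 2 + c ^ 2)) with ((a + b + c) ^ 2 + ((a - b) ^ 2 + (b - c) ^ 2 + (a - c) ^ 2)) by ring.
  lra.
Qed.

Lemma sq_le u b : Rabs u <= b -> u ^ 2 <= b ^ 2.
Proof.
  intro H. rewrite <- (pow2_abs u). assert (0 <= Rabs u) by apply Rabs_pos.
  apply pow_incr; lra.
Qed.

Definition LU K := 5 * K * S1 + 4 * K.
Definition L0 K := K * S0 + K.
Definition LV K := 8 * K * S2 + 2 * K.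
Definition Acoef alpha K p := 3 * (LU K * Rpower p (alpha - 1)) ^ 2.
Definition Bcoef alpha K p N := 3 * ((LV K * Rpower p (alpha - 1)) ^ 2 + (K * Rpower p (alpha - 1)) ^ 2) / (4 * N ^ 2).
Definition Dcoef alpha K p Dl N := 3 * (L0 K * Rpower p alpha) ^ 2 + 3 * (LV K * Rpower Dl (alpha - 1)) ^ 2 / (4 * N ^ 2).

Lemma pointwise alpha phi dphi K Dl p N k : Hyp alpha phi dphi K -> 0 < Dl -> Dl < p -> p <= 1 -> 1 <= N ->
  (phibar phi dphi Dl (INR k / N) - INR k / (2 * N ^ 2) * phibar2 phi dphi Dl (INR k / N)
     - phi p + p * dphi 2%nat p / (2 * N)) ^ 2
  <= Acoef alpha K p * (INR k / N - p) ^ 2 + Bcoef alpha K p N + Dcoef alpha K p Dl N * exp (N * p / 2 - INR k).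
Proof.
  intros HH HD HDp Hp HN.
  set (x := INR k / N).
  assert (Hx0 : 0 <= x) by (unfold x; apply Rdiv_le_0_compat; [apply pos_INR | lra]).
  assert (E : phibar phi dphi Dl x - INR k / (2 * N ^ 2) * phibar2 phi dphi Dl x - phi p + p * dphi 2%nat p / (2 * N)
     = (phibar phi dphi Dl x - phi p) + (- ((x * phibar2 phi dphi Dl x) / (2 * N))) + (p * dphi 2%nat p) / (2 * N)).
  { unfold x. field. lra. }
  rewrite E. eapply Rle_trans. apply sq3.
  set (U := phibar phi dphi Dl x - phi p).
  set (V := x * phibar2 phi dphi Dl x).
  set (Wt := p * dphi 2%nat p).
  assert (E2 : forall z, (z / (2 * N)) ^ 2 = z ^ 2 / (4 * N ^ 2)) by (intro; field; lra).
  replace ((- (V / (2 * N))) ^ 2) with ((V / (2 * N)) ^ 2) by ring. rewrite !E2.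
  assert (HN2 : 0 < 4 * N ^ 2) by nra.
  assert (HW := sq_le _ _ (W_bound _ _ _ _ p HH ltac:(lra))). fold Wt in HW.
  assert (HH' := HH). destruct HH' as [Ha [HK _]].
  destruct S_pos as [HS0 [HS1 HS2]].
  assert (HDc : 0 <= Dcoef alpha K p Dl N).
  { unfold Dcoef. apply Rplus_le_le_0_compat. apply Rmult_le_pos; [lra | apply pow2_ge_0].
    apply Rdiv_le_0_compat; [apply Rmult_le_pos; [lra | apply pow2_ge_0] | lra]. }
  assert (Hexp : 0 < exp (N * p / 2 - INR k)) by apply exp_pos.
  assert (Hsq : 0 <= (x - p) ^ 2) by apply pow2_ge_0.
  assert (HA : 0 <= Acoef alpha K p) by (unfold Acoef; apply Rmult_le_pos; [lra | apply pow2_ge_0]).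
  assert (Wd : Wt ^ 2 / (4 * N ^ 2) <= (K * Rpower p (alpha - 1)) ^ 2 / (4 * N ^ 2))
    by (apply Rmult_le_compat_r; [left; apply Rinv_0_lt_compat; lra | exact HW]).
  destruct (Rle_lt_dec (p / 2) x) as [Hx | Hx].
  - assert (HU := sq_le _ _ (U_big _ _ _ _ Dl p x HH HD HDp Hp Hx)). fold U in HU.
    assert (HV := sq_le _ _ (V_big _ _ _ _ Dl p x HH HD HDp Hp Hx)). fold V in HV.
    rewrite !Rpow_mult_distr, pow2_abs in HU. rewrite <- Rpow_mult_distr in HU.
    assert (Vd : V ^ 2 / (4 * N ^ 2) <= ((8 * K * S2 + 2 * K) * Rpower p (alpha - 1)) ^ 2 / (4 * N ^ 2))
      by (apply Rmult_le_compat_r; [left; apply Rinv_0_lt_compat; lra | exact HV]).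
    assert (Bq : 3 * (((8 * K * S2 + 2 * K) * Rpower p (alpha - 1)) ^ 2 / (4 * N ^ 2) + (K * Rpower p (alpha - 1)) ^ 2 / (4 * N ^ 2)) = Bcoef alpha K p N)
      by (unfold Bcoef, LV; field; lra).
    assert (Aq : 3 * (((5 * K * S1 + 4 * K) * Rpower p (alpha - 1)) ^ 2 * (x - p) ^ 2) = Acoef alpha K p * (x - p) ^ 2)
      by (unfold Acoef, LU; ring).
    assert (0 <= Dcoef alpha K p Dl N * exp (N * p / 2 - INR k)) by (apply Rmult_le_pos; lra).
    lra.
  - assert (HU := sq_le _ _ (U_small _ _ _ _ Dl p x HH HD HDp Hp (conj Hx0 Hx))). fold U in HU.
    assert (HV := sq_le _ _ (V_small _ _ _ _ Dl p x HH HD HDp Hp (conj Hx0 Hx))). fold V in HV.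
    assert (Vd : V ^ 2 / (4 * N ^ 2) <= ((8 * K * S2 + 2 * K) * Rpower Dl (alpha - 1)) ^ 2 / (4 * N ^ 2))
      by (apply Rmult_le_compat_r; [left; apply Rinv_0_lt_compat; lra | exact HV]).
    assert (Hk : INR k < N * p / 2).
    { unfold x in Hx. apply Rmult_lt_compat_r with (r := N) in Hx; [|lra].
      unfold Rdiv in Hx. rewrite Rmult_assoc, Rinv_l, Rmult_1_r in Hx by lra. lra. }
    assert (He1 : 1 <= exp (N * p / 2 - INR k)).
    { rewrite <- exp_0. destruct (Req_dec (N * p / 2 - INR k) 0) as [Z|Z]. rewrite Z; lra.
      left. apply exp_increasing. lra. }
    assert (Dq : Dcoef alpha K p Dl N <= Dcoef alpha K p Dl N * exp (N * p / 2 - INR k)).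
    { rewrite <- (Rmult_1_r (Dcoef _ _ _ _ _)) at 1. apply Rmult_le_compat_l; lra. }
    assert (Dq2 : 3 * (((K * S0 + K) * Rpower p alpha) ^ 2 + ((8 * K * S2 + 2 * K) * Rpower Dl (alpha - 1)) ^ 2 / (4 * N ^ 2)) = Dcoef alpha K p Dl N)
      by (unfold Dcoef, L0, LV; field; lra).
    assert (Bq : 3 * ((K * Rpower p (alpha - 1)) ^ 2 / (4 * N ^ 2)) <= Bcoef alpha K p N).
    { unfold Bcoef. unfold Rdiv. rewrite <- Rmult_assoc.
      apply Rmult_le_compat_r. left; apply Rinv_0_lt_compat; lra.
      assert (0 <= (LV K * Rpower p (alpha - 1)) ^ 2) by apply pow2_ge_0. lra. }
    assert (0 <= Acoef alpha K p * (x - p) ^ 2) by (apply Rmult_le_pos; lra).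
    lra.
Qed.

Lemma exp_m1_lt : exp (-1) < 1 / 2.
Proof.
  assert (H := exp_ineq1 1 ltac:(lra)).
  assert (E : exp (-1) * exp 1 = 1) by (rewrite <- exp_plus; replace (-1 + 1) with 0 by ring; apply exp_0).
  assert (0 < exp (-1)) by apply exp_pos. nra.
Qed.

Lemma rp_sq p a : 0 < p -> Rpower p a ^ 2 = Rpower p (2 * a).
Proof. intro. simpl. rewrite Rmult_1_r, <- Rpower_plus. f_equal. ring. Qed.

Theorem lemma7 (alpha : R) (phi : R -> R) (dphi : nat -> R -> R) (W c c' : R) :
  0 < alpha < 1 ->
  (forall x, 0 <= x <= 1 -> 0 <= phi x) ->
  (forall x, I01 x -> dphi 0%nat x = phi x) ->
  (forall m x, (m < 4)%nat -> I01 x -> deriv_within01 (dphi m) (dphi (S m) x) x) ->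
  (forall x, I01 x -> cont_within01 (dphi 4%nat) x) ->
  0 < W ->
  (forall x, I01 x ->
     (2 - alpha) * (3 - alpha) * (4 - alpha) * W * Rpower x (alpha - 4) + c'
       <= Rabs (dphi 4%nat x) /\
     Rabs (dphi 4%nat x)
       <= (2 - alpha) * (3 - alpha) * (4 - alpha) * W * Rpower x (alpha - 4) + c) ->
  forall c0 : R, 0 < c0 ->
  exists C : R, 0 < C /\
  forall (n : nat) (D p : R),
    (1 <= n)%nat -> 0 < D <= 1 -> c0 / INR n <= D -> D < p -> p <= 1 ->
    poisson_var (INR n * p)
      (fun k => phibar phi dphi D (INR k / INR n)
                - INR k / (2 * INR n ^ 2) * phibar2 phi dphi D (INR k / INR n)
                - phi p + p * dphi 2%nat p / (2 * INR n))
    <= C * (Rpower p (2 * alpha - 1) / INR n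
            + 1 / (INR n ^ 4 * Rpower D (4 - 2 * alpha))
            + p / INR n).
Proof.
  intros Ha Hpos H0 Hd Hc4 HW H4 c0 Hc0.
  destruct (get_hyp alpha phi dphi W c c' Ha H0 Hd HW H4) as [K HH].
  assert (HH' := HH). destruct HH' as [_ [HK _]].
  set (cc := 1 / 2 - exp (-1)).
  assert (Hcc : 0 < cc) by (unfold cc; assert (H := exp_m1_lt); lra).
  set (M4 := (INR 4 / cc) ^ 4). set (M2 := (INR 2 / cc) ^ 2).
  assert (HM4 : 0 <= M4) by (unfold M4; apply pow_le; apply Rdiv_le_0_compat; [apply pos_INR | lra]).
  assert (HM2 : 0 <= M2) by (unfold M2; apply pow_le; apply Rdiv_le_0_compat; [apply pos_INR | lra]).
  set (C1 := 3 * LU K ^ 2 + 3 * (LV K ^ 2 + K ^ 2) / (4 * c0)).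
  set (C2 := 3 * L0 K ^ 2 * M4 + 3 * LV K ^ 2 / 4 * M2).
  assert (HC1 : 0 <= C1).
  { unfold C1. apply Rplus_le_le_0_compat. apply Rmult_le_pos; [lra | apply pow2_ge_0].
    apply Rdiv_le_0_compat. apply Rmult_le_pos. lra.
    apply Rplus_le_le_0_compat; apply pow2_ge_0. lra. }
  assert (HC2 : 0 <= C2).
  { unfold C2. apply Rplus_le_le_0_compat. apply Rmult_le_pos; [apply Rmult_le_pos; [lra | apply pow2_ge_0] | lra].
    apply Rmult_le_pos; [|lra]. apply Rmult_le_pos; [apply Rmult_le_pos; [lra | apply pow2_ge_0] | lra]. }
  exists (C1 + C2 + 1). split. lra.
  intros n Dl p Hn HD HcD HDp Hp.
  assert (HN : 1 <= INR n) by (replace 1 with (INR 1) by reflexivity; apply le_INR; auto).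
  set (N := INR n) in *.
  destruct S_pos as [HS0 [HS1 HS2]].
  set (A := Acoef alpha K p). set (B := Bcoef alpha K p N). set (Dc := Dcoef alpha K p Dl N).
  assert (HS := ser_T (N * p) N p A B Dc ltac:(lra) eq_refl).
  eapply Rle_trans.
  { apply (var_le (N * p) _ (fun k => A * (INR k / N - p) ^ 2 + B + Dc * exp (N * p / 2 - INR k))).
    nra. intro k. apply (pointwise alpha phi dphi K Dl p N k HH); lra.
    eexists. exact HS. }
  rewrite (is_series_unique _ _ HS).
  set (r := Rpower p (alpha - 1)). set (Q := Rpower p (2 * alpha - 1)). set (Z := Rpower Dl (2 * alpha - 4)).
  assert (Hr2 : r ^ 2 = Q / p).
  { unfold r, Q. rewrite rp_sq by lra. replace (2 * (alpha - 1)) with ((2 * alpha - 1) - 1) by ring.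
    apply rp_m1. lra. }
  assert (HQ : 0 < Q) by apply rp_pos. assert (HZ : 0 < Z) by apply rp_pos.
  assert (HNp : c0 <= N * p).
  { apply Rmult_le_compat_l with (r := N) in HcD; [|lra].
    replace (N * (c0 / N)) with c0 in HcD by (field; lra). nra. }
  assert (Ea : A * (p / N) = 3 * LU K ^ 2 * Q / N).
  { unfold A, Acoef. rewrite Rpow_mult_distr. fold r. rewrite Hr2. field. lra. }
  assert (Eb : B <= 3 * (LV K ^ 2 + K ^ 2) / (4 * c0) * Q / N).
  { unfold B, Bcoef. rewrite !Rpow_mult_distr. fold r. rewrite Hr2.
    set (X := 3 * (LV K ^ 2 + K ^ 2) * Q / 4).
    assert (HX : 0 <= X) by (unfold X; assert (0 <= LV K ^ 2) by apply pow2_ge_0; assert (0 <= K ^ 2) by apply pow2_ge_0; nra).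
    replace (3 * (LV K ^ 2 * (Q / p) + K ^ 2 * (Q / p)) / (4 * N ^ 2)) with (X * / (N * (N * p))) by (unfold X; field; lra).
    replace (3 * (LV K ^ 2 + K ^ 2) / (4 * c0) * Q / N) with (X * / (N * c0)) by (unfold X; field; lra).
    apply Rmult_le_compat_l; auto. apply Rinv_le_contravar. nra. nra. }
  assert (Eexp : exp (N * p / 2) * exp (- (N * p)) * exp (N * p * exp (-1)) = exp (- (cc * (N * p)))).
  { rewrite <- !exp_plus. apply f_equal. unfold cc. field. }
  rewrite Eexp.
  assert (Hp4 : Rpower p alpha ^ 2 <= Z * p ^ 4).
  { rewrite rp_sq by lra. replace (2 * alpha) with ((2 * alpha - 4) + INR 4) by (simpl; ring).
    rewrite Rpower_plus, Rpower_pow by lra.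
    assert (Rpower p (2 * alpha - 4) <= Z) by (apply rp_anti; lra).
    assert (0 < p ^ 4) by (apply pow_lt; lra). nra. }
  assert (HD2 : Rpower Dl (alpha - 1) ^ 2 = Z * Dl ^ 2).
  { rewrite rp_sq by lra. replace (2 * (alpha - 1)) with ((2 * alpha - 4) + INR 2) by (simpl; ring).
    rewrite Rpower_plus, Rpower_pow by lra. reflexivity. }
  set (E := exp (- (cc * (N * p)))).
  assert (HE : 0 < E) by apply exp_pos.
  assert (B4 := exp_pow_bound cc (N * p) 4 Hcc ltac:(nra) ltac:(lia)). fold E M4 in B4.
  assert (B2 := exp_pow_bound cc (N * p) 2 Hcc ltac:(nra) ltac:(lia)). fold E M2 in B2.
  assert (Ec : Dc * E <= C2 * (Z / N ^ 4)).
  { unfold Dc, Dcoef. rewrite !Rpow_mult_distr, HD2.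
    assert (HL0 : 0 <= L0 K ^ 2) by apply pow2_ge_0. assert (HLV : 0 <= LV K ^ 2) by apply pow2_ge_0.
    assert (S1' : 3 * (L0 K ^ 2 * Rpower p alpha ^ 2) <= 3 * L0 K ^ 2 * Z * p ^ 4) by nra.
    assert (Dl2 : (N * Dl) ^ 2 <= (N * p) ^ 2) by (apply pow_incr; nra).
    assert (S2' : 3 * (LV K ^ 2 * (Z * Dl ^ 2)) / (4 * N ^ 2) = 3 * LV K ^ 2 / 4 * Z / N ^ 4 * (N * Dl) ^ 2)
      by (field; lra).
    assert (S3 : 3 * L0 K ^ 2 * Z * p ^ 4 = 3 * L0 K ^ 2 * Z / N ^ 4 * (N * p) ^ 4) by (field; lra).
    assert (HN4 : 0 < N ^ 4) by (apply pow_lt; lra).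
    assert (HZN : 0 <= Z / N ^ 4) by (apply Rdiv_le_0_compat; lra).
    apply Rle_trans with ((3 * L0 K ^ 2 * Z / N ^ 4 * (N * p) ^ 4 + 3 * LV K ^ 2 / 4 * Z / N ^ 4 * (N * p) ^ 2) * E).
    { apply Rmult_le_compat_r. lra. rewrite S2', <- S3.
      apply Rplus_le_compat. lra. apply Rmult_le_compat_l; auto.
      apply Rdiv_le_0_compat; [|lra]. apply Rmult_le_pos; [|lra]. apply Rdiv_le_0_compat; lra. }
    unfold C2.
    replace ((3 * L0 K ^ 2 * Z / N ^ 4 * (N * p) ^ 4 + 3 * LV K ^ 2 / 4 * Z / N ^ 4 * (N * p) ^ 2) * E)
      with ((Z / N ^ 4) * (3 * L0 K ^ 2 * ((N * p) ^ 4 * E) + 3 * LV K ^ 2 / 4 * ((N * p) ^ 2 * E))) by (field; lra).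
    rewrite (Rmult_comm _ (Z / N ^ 4)). apply Rmult_le_compat_l; auto.
    apply Rplus_le_compat. apply Rmult_le_compat_l; lra.
    apply Rmult_le_compat_l; [nra | lra]. }
  assert (EZ : 1 / (N ^ 4 * Rpower Dl (4 - 2 * alpha)) = Z / N ^ 4).
  { unfold Z. replace (2 * alpha - 4) with (- (4 - 2 * alpha)) by ring. rewrite Rpower_Ropp.
    assert (0 < Rpower Dl (4 - 2 * alpha)) by apply rp_pos. field. split; lra. }
  rewrite EZ. rewrite Ea.
  assert (HQN : 0 <= Q / N) by (apply Rdiv_le_0_compat; lra).
  assert (HZN : 0 <= Z / N ^ 4) by (apply Rdiv_le_0_compat; [lra | apply pow_lt; lra]).
  assert (HpN : 0 <= p / N) by (apply Rdiv_le_0_compat; lra).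
  assert (T1 : 3 * LU K ^ 2 * Q / N + 3 * (LV K ^ 2 + K ^ 2) / (4 * c0) * Q / N = C1 * (Q / N))
    by (unfold C1; field; lra).
  assert (C1 * (Q / N) + C2 * (Z / N ^ 4) <= (C1 + C2 + 1) * (Q / N + Z / N ^ 4 + p / N)) by nra.
  lra.
Qed.
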